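(* Fix integers $d\ge2$, $r\ge1$ and a constant $M>0$. There is a constant $C>0$ depending only on $d,r,M$ such that the following holds for all $n$. Let $H$ be a Hermitian operator on $(\mathbb C^d)^{\otimes n}$ that is translation-invariant ($H\mathcal T=\mathcal T H$) and whose spectrum has non-degenerate gaps. Let $A,B$ be traceless operators (not necessarily Hermitian or unitary), each $r$-local, with $\|A\|,\|B\|\le M$. Then $$\big|\mathrm{OTOC}^\infty(A,B)\big|\le C/n,\qquad \mathrm{OTOC}^\infty(A,B):=\lim_{\tau\to\infty}\frac1\tau\int_0^\tau\langle A^\dagger(t)B^\dagger A(t)B\rangle\,dt,$$ where $A(t):=e^{iHt}Ae^{-iHt}$ and $\langle X\rangle:=\operatorname{tr}X/D$ with $D=d^n$.
   Context: $\mathcal T$ is the unitary lattice translation operator on $(\mathbb C^d)^{\otimes n}$, defined on computational basis states by $\mathcal T(|x_1\rangle\otimes\cdots\otimes|x_n\rangle)=|x_n\rangle\otimes|x_1\rangle\otimes\cdots\otimes|x_{n-1}\rangle$. An operator is $r$-local if it acts nontrivially only on a set of at most $r$ consecutive sites (consecutive in the cyclic sense, sites $1,\dots,n$ arranged on a ring). The spectrum $\{E_j\}$ of a Hamiltonian has non-degenerate gaps if for all $j\neq k$, $E_j-E_k=E_{j'}-E_{k'}$ implies $j=j'$ and $k=k'$. $\|\cdot\|$ is the operator norm. *)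

(* Defs.v *)
From Stdlib Require Import Reals Lra Lia List Arith.
Import ListNotations.
Open Scope R_scope.

Record Cpx := mkCpx { Re : R; Im : R }.
Definition C0 : Cpx := mkCpx 0 0.
Definition C1 : Cpx := mkCpx 1 0.
Definition Cadd (z w : Cpx) : Cpx := mkCpx (Re z + Re w) (Im z + Im w).
Definition Cmul (z w : Cpx) : Cpx :=
  mkCpx (Re z * Re w - Im z * Im w) (Re z * Im w + Im z * Re w).
Definition Cconj (z : Cpx) : Cpx := mkCpx (Re z) (- Im z).
Definition Crscale (a : R) (z : Cpx) : Cpx := mkCpx (a * Re z) (a * Im z).
Definition Cofreal (a : R) : Cpx := mkCpx a 0.
Definition Cmod (z : Cpx) : R := sqrt (Re z * Re z + Im z * Im z).

Fixpoint csum (f : nat -> Cpx) (N : nat) : Cpx :=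
  match N with O => C0 | S k => Cadd (csum f k) (f k) end.
Fixpoint rsum (f : nat -> R) (N : nat) : R :=
  match N with O => 0 | S k => rsum f k + f k end.

(** * Operators on C^D, D = d^n, as matrices indexed by basis labels < D.
    Entries at labels >= D are irrelevant. *)
Definition vec := nat -> Cpx.
Definition mat := nat -> nat -> Cpx.

Definition mmul (D : nat) (A B : mat) : mat :=
  fun i j => csum (fun k => Cmul (A i k) (B k j)) D.
Definition mvmul (D : nat) (A : mat) (v : vec) : vec :=
  fun i => csum (fun k => Cmul (A i k) (v k)) D.
Definition madj (A : mat) : mat := fun i j => Cconj (A j i).
Definition mscale (z : Cpx) (A : mat) : mat := fun i j => Cmul z (A i j).
Definition mid : mat := fun i j => if Nat.eqb i j then C1 else C0.
Fixpoint mpow (D : nat) (A : mat) (k : nat) : mat :=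
  match k with O => mid | S k' => mmul D A (mpow D A k') end.

Definition ctrace (D : nat) (A : mat) : Cpx := csum (fun i => A i i) D.
Definition expect (D : nat) (A : mat) : Cpx := Crscale (/ INR D) (ctrace D A).

Definition cinner (D : nat) (u v : vec) : Cpx :=
  csum (fun i => Cmul (Cconj (u i)) (v i)) D.
Definition vnorm (D : nat) (v : vec) : R :=
  sqrt (rsum (fun i => Re (v i) * Re (v i) + Im (v i) * Im (v i)) D).

Definition hermitian (D : nat) (H : mat) : Prop :=
  forall i j, (i < D)%nat -> (j < D)%nat -> H i j = Cconj (H j i).
Definition mcommute (D : nat) (X Y : mat) : Prop :=
  forall i j, (i < D)%nat -> (j < D)%nat -> mmul D X Y i j = mmul D Y X i j.
Definition traceless (D : nat) (A : mat) : Prop := ctrace D A = C0.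
Definition opnorm_le (D : nat) (A : mat) (M : R) : Prop :=
  forall v : vec, vnorm D (mvmul D A v) <= M * vnorm D v.

(** [E] is the spectrum {E_j}_{j<D} (with multiplicity) of the Hermitian [H]:
    there is an orthonormal basis (b j)_{j<D} with H b_j = E_j b_j. *)
Definition spectrum_of (D : nat) (H : mat) (E : nat -> R) : Prop :=
  exists b : nat -> vec,
    (forall j k, (j < D)%nat -> (k < D)%nat ->
        cinner D (b j) (b k) = if Nat.eqb j k then C1 else C0) /\
    (forall j i, (j < D)%nat -> (i < D)%nat ->
        mvmul D H (b j) i = Cmul (Cofreal (E j)) (b j i)).

Definition nondeg_gaps (D : nat) (E : nat -> R) : Prop :=
  forall j k j' k', (j < D)%nat -> (k < D)%nat -> (j' < D)%nat -> (k' < D)%nat ->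
    j <> k -> E j - E k = E j' - E k' -> j = j' /\ k = k'.

Definition is_mexp (D : nat) (X E : mat) : Prop :=
  forall i j, (i < D)%nat -> (j < D)%nat ->
    Un_cv (fun N => Re (csum (fun k => Crscale (/ INR (fact k)) (mpow D X k i j)) (S N)))
          (Re (E i j)) /\
    Un_cv (fun N => Im (csum (fun k => Crscale (/ INR (fact k)) (mpow D X k i j)) (S N)))
          (Im (E i j)).

(** * Tensor-product structure of (C^d)^{(x)n}.
    Basis label x < d^n encodes |x_1> (x) ... (x) |x_n>, where the value at
    site k+1 (k = 0..n-1) is the k-th base-d digit of x. *)
Definition dig (d k x : nat) : nat := ((x / d ^ k) mod d)%nat.

(** lattice translation: T|x_1..x_n> = |x_n x_1 .. x_{n-1}>, i.e.
    <y|T|x> = 1 iff y_k = x_{k-1 mod n} for all sites k. *)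
Definition transl (d n : nat) : mat :=
  fun y x =>
    if forallb (fun k => Nat.eqb (dig d k y) (dig d ((k + n - 1) mod n) x)) (seq 0 n)
    then C1 else C0.

(** site k (0-based) lies in the cyclic window {s, s+1, ..., s+m-1} (mod n) *)
Definition in_window (n s m k : nat) : bool := Nat.ltb (((k + n - s) mod n)) m.

Definition agree_off (d n s m y x : nat) : bool :=
  forallb (fun k => orb (in_window n s m k) (Nat.eqb (dig d k y) (dig d k x))) (seq 0 n).

Definition proj_window (d n s m y : nat) : nat :=
  list_sum (map (fun k => if in_window n s m k then (dig d k y * d ^ k)%nat else 0%nat)
                (seq 0 n)).

(** A is r-local: A = a (x) Id, with a acting on a set of at most r
    cyclically consecutive sites (the window {s,...,s+m-1}, m <= r). *)
Definition r_local (d n r : nat) (A : mat) : Prop :=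
  exists (s m : nat) (a : nat -> nat -> Cpx),
    (s < n)%nat /\ (m <= r)%nat /\
    forall y x, (y < d ^ n)%nat -> (x < d ^ n)%nat ->
      A y x = if agree_off d n s m y x
              then a (proj_window d n s m y) (proj_window d n s m x) else C0.

(** * OTOC integrand <A^dag(t) B^dag A(t) B>, with A(t) = U t * A * V t,
    where U t = e^{iHt}, V t = e^{-iHt}. *)
Definition heis (D : nat) (U V : R -> mat) (A : mat) (t : R) : mat :=
  mmul D (mmul D (U t) A) (V t).
Definition otoc_integrand (D : nat) (U V : R -> mat) (A B : mat) (t : R) : Cpx :=
  let At := heis D U V A t in
  expect D (mmul D (mmul D (mmul D (madj At) (madj B)) At) B).

Definition time_avg_cv (f : R -> Cpx) (L : Cpx) : Prop :=
  exists (pre : forall tau, Riemann_integrable (fun t => Re (f t)) 0 tau)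
         (pim : forall tau, Riemann_integrable (fun t => Im (f t)) 0 tau),
    forall eps, 0 < eps -> exists T, forall tau, T < tau ->
      Rabs (RiemannInt (pre tau) / tau - Re L) < eps /\
      Rabs (RiemannInt (pim tau) / tau - Im L) < eps.

(* Main.v *)
From Stdlib Require Import Reals Lra Lia List Arith Permutation Ring Bool Classical FunctionalExtensionality.
Require Import Defs.
From HB Require structures.
From mathcomp Require all_boot all_algebra Rstruct.
From Coquelicot Require Coquelicot.
Import ListNotations.

Close Scope nat_scope.
Close Scope R_scope.
Open Scope R_scope.

Lemma Cpx_eq (z w : Cpx) : Re z = Re w -> Im z = Im w -> z = w.
Proof. destruct z, w; simpl; intros; subst; reflexivity. Qed.

Definition Copp (z : Cpx) : Cpx := mkCpx (- Re z) (- Im z).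
Definition Csub (z w : Cpx) : Cpx := Cadd z (Copp w).

Lemma Cring : ring_theory C0 C1 Cadd Cmul Csub Copp (@eq Cpx).
Proof.
  constructor; intros; apply Cpx_eq; simpl; ring.
Qed.
Add Ring Cpx_ring : Cring.

Lemma Crscale_mul a z : Crscale a z = Cmul (Cofreal a) z.
Proof. apply Cpx_eq; simpl; ring. Qed.
Lemma Cofreal_add a b : Cofreal (a + b) = Cadd (Cofreal a) (Cofreal b).
Proof. apply Cpx_eq; simpl; ring. Qed.
Lemma Cofreal_mul a b : Cofreal (a * b) = Cmul (Cofreal a) (Cofreal b).
Proof. apply Cpx_eq; simpl; ring. Qed.
Lemma Cconj_add z w : Cconj (Cadd z w) = Cadd (Cconj z) (Cconj w).
Proof. apply Cpx_eq; simpl; ring. Qed.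
Lemma Cconj_mul z w : Cconj (Cmul z w) = Cmul (Cconj z) (Cconj w).
Proof. apply Cpx_eq; simpl; ring. Qed.
Lemma Cconj_conj z : Cconj (Cconj z) = z.
Proof. apply Cpx_eq; simpl; ring. Qed.
Lemma Cconj_ofreal a : Cconj (Cofreal a) = Cofreal a.
Proof. apply Cpx_eq; simpl; ring. Qed.
Lemma Cconj_0 : Cconj C0 = C0.
Proof. apply Cpx_eq; simpl; ring. Qed.
Lemma Cconj_1 : Cconj C1 = C1.
Proof. apply Cpx_eq; simpl; ring. Qed.

Definition Cnorm2 (z : Cpx) : R := Re z * Re z + Im z * Im z.
Lemma Cnorm2_nonneg z : 0 <= Cnorm2 z.
Proof. unfold Cnorm2; nra. Qed.
Lemma Cnorm2_mul z w : Cnorm2 (Cmul z w) = Cnorm2 z * Cnorm2 w.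
Proof. unfold Cnorm2; simpl; ring. Qed.
Lemma Cnorm2_conj z : Cnorm2 (Cconj z) = Cnorm2 z.
Proof. unfold Cnorm2; simpl; ring. Qed.
Lemma Cmul_conj_l z : Cmul (Cconj z) z = Cofreal (Cnorm2 z).
Proof. apply Cpx_eq; unfold Cnorm2; simpl; ring. Qed.
Lemma Cmul_conj_r z : Cmul z (Cconj z) = Cofreal (Cnorm2 z).
Proof. apply Cpx_eq; unfold Cnorm2; simpl; ring. Qed.

Lemma Cmod_sq z : Cmod z = sqrt (Cnorm2 z).
Proof. reflexivity. Qed.
Lemma Cmod_nonneg z : 0 <= Cmod z.
Proof. apply sqrt_pos. Qed.
Lemma Cmod_mul z w : Cmod (Cmul z w) = Cmod z * Cmod w.
Proof.
  rewrite !Cmod_sq, Cnorm2_mul, sqrt_mult; auto using Cnorm2_nonneg.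
Qed.
Lemma Cmod_conj z : Cmod (Cconj z) = Cmod z.
Proof. rewrite !Cmod_sq, Cnorm2_conj; auto. Qed.
Lemma Cmod_sqr z : Cmod z * Cmod z = Cnorm2 z.
Proof. rewrite Cmod_sq. apply sqrt_sqrt, Cnorm2_nonneg. Qed.
Lemma Cmod_ofreal a : Cmod (Cofreal a) = Rabs a.
Proof.
  rewrite Cmod_sq; unfold Cnorm2; simpl.
  replace (a * a + 0 * 0) with (a * a) by ring. apply sqrt_Rsqr_abs.
Qed.
Lemma Cmod_add z w : Cmod (Cadd z w) <= Cmod z + Cmod w.
Proof.
  assert (Hz := Cmod_nonneg z); assert (Hw := Cmod_nonneg w).
  assert (Hs := Cmod_nonneg (Cadd z w)).
  apply Rsqr_incr_0_var; [| lra]. unfold Rsqr.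
  rewrite Cmod_sqr.
  assert (Hz2 := Cmod_sqr z); assert (Hw2 := Cmod_sqr w).
  unfold Cnorm2 in *; simpl.
  assert (Hc : Re z * Re w + Im z * Im w <= Cmod z * Cmod w).
  { destruct (Rle_dec (Re z * Re w + Im z * Im w) 0) as [h|h]. nra.
    apply Rsqr_incr_0_var; [|nra]. unfold Rsqr.
    replace (Cmod z * Cmod w * (Cmod z * Cmod w)) with ((Cmod z * Cmod z) * (Cmod w * Cmod w)) by ring.
    rewrite Hz2, Hw2. unfold Cnorm2.
    assert (0 <= (Re z * Im w - Im z * Re w) * (Re z * Im w - Im z * Re w)) by apply Rle_0_sqr.
    unfold Rsqr.
    match goal with |- ?a <= ?b => assert (b - a = (Re z * Im w - Im z * Re w) * (Re z * Im w - Im z * Re w)) by ring end. lra. }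
  nra.
Qed.
Lemma Cmod_re z : Rabs (Re z) <= Cmod z.
Proof.
  rewrite Cmod_sq. unfold Cnorm2. rewrite <- sqrt_Rsqr_abs. apply sqrt_le_1_alt.
  unfold Rsqr; nra.
Qed.
Lemma Cmod_im z : Rabs (Im z) <= Cmod z.
Proof.
  rewrite Cmod_sq. unfold Cnorm2. rewrite <- sqrt_Rsqr_abs. apply sqrt_le_1_alt.
  unfold Rsqr; nra.
Qed.
Lemma Cmod_0 : Cmod C0 = 0.
Proof. unfold Cmod; simpl. replace (0*0+0*0) with 0 by ring. apply sqrt_0. Qed.

Lemma csum_ext f g N : (forall k, (k < N)%nat -> f k = g k) -> csum f N = csum g N.
Proof.
  induction N; intros H; simpl; auto.
  rewrite IHN by (intros; apply H; lia). rewrite H by lia. auto.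
Qed.
Lemma rsum_ext f g N : (forall k, (k < N)%nat -> f k = g k) -> rsum f N = rsum g N.
Proof.
  induction N; intros H; simpl; auto.
  rewrite IHN by (intros; apply H; lia). rewrite H by lia. auto.
Qed.
Lemma csum_add f g N : csum (fun k => Cadd (f k) (g k)) N = Cadd (csum f N) (csum g N).
Proof. induction N; simpl. apply Cpx_eq; simpl; ring. rewrite IHN. ring. Qed.
Lemma rsum_add f g N : rsum (fun k => f k + g k) N = rsum f N + rsum g N.
Proof. induction N; simpl. ring. rewrite IHN. ring. Qed.
Lemma csum_scal c f N : csum (fun k => Cmul c (f k)) N = Cmul c (csum f N).
Proof. induction N; simpl. apply Cpx_eq; simpl; ring. rewrite IHN. ring. Qed.
Lemma csum_scal_r c f N : csum (fun k => Cmul (f k) c) N = Cmul (csum f N) c.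
Proof. induction N; simpl. apply Cpx_eq; simpl; ring. rewrite IHN. ring. Qed.
Lemma rsum_scal c f N : rsum (fun k => c * f k) N = c * rsum f N.
Proof. induction N; simpl. ring. rewrite IHN. ring. Qed.
Lemma csum_zero N : csum (fun _ => C0) N = C0.
Proof. induction N; simpl; auto. rewrite IHN. ring. Qed.
Lemma rsum_zero N : rsum (fun _ => 0) N = 0.
Proof. induction N; simpl; auto. rewrite IHN. ring. Qed.
Lemma csum_swap (f : nat -> nat -> Cpx) N M :
  csum (fun i => csum (fun j => f i j) M) N = csum (fun j => csum (fun i => f i j) N) M.
Proof.
  induction N; simpl. symmetry; apply csum_zero.
  rewrite IHN, <- csum_add. auto.
Qed.
Lemma rsum_swap (f : nat -> nat -> R) N M :
  rsum (fun i => rsum (fun j => f i j) M) N = rsum (fun j => rsum (fun i => f i j) N) M.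
Proof.
  induction N; simpl. symmetry; apply rsum_zero.
  rewrite IHN, <- rsum_add. auto.
Qed.
Lemma Re_csum f N : Re (csum f N) = rsum (fun k => Re (f k)) N.
Proof. induction N; simpl; auto. rewrite IHN; auto. Qed.
Lemma Im_csum f N : Im (csum f N) = rsum (fun k => Im (f k)) N.
Proof. induction N; simpl; auto. rewrite IHN; auto. Qed.
Lemma Cconj_csum f N : Cconj (csum f N) = csum (fun k => Cconj (f k)) N.
Proof.
  induction N; simpl. apply Cconj_0. rewrite Cconj_add, IHN; auto.
Qed.
Lemma csum_ofreal f N : csum (fun k => Cofreal (f k)) N = Cofreal (rsum f N).
Proof. induction N; simpl; auto. rewrite IHN, Cofreal_add; auto. Qed.

Definition deltaC (i j : nat) : Cpx := if Nat.eqb i j then C1 else C0.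
Definition deltaR (i j : nat) : R := if Nat.eqb i j then 1 else 0.

Lemma csum_delta_l c f N : (c < N)%nat -> csum (fun k => Cmul (deltaC c k) (f k)) N = f c.
Proof.
  induction N; intros H. lia. simpl.
  destruct (Nat.eq_dec c N) as [->|ne].
  - rewrite (csum_ext _ (fun _ => C0)). rewrite csum_zero. unfold deltaC. rewrite Nat.eqb_refl. ring.
    intros k Hk. unfold deltaC. destruct (Nat.eqb_spec N k). lia. ring.
  - rewrite IHN by lia. unfold deltaC. destruct (Nat.eqb_spec c N). lia. ring.
Qed.
Lemma csum_delta_r c f N : (c < N)%nat -> csum (fun k => Cmul (deltaC k c) (f k)) N = f c.
Proof.
  intros H. rewrite <- (csum_delta_l c f N H). apply csum_ext. intros k _.
  unfold deltaC. rewrite Nat.eqb_sym. auto.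
Qed.
Lemma rsum_delta_l c f N : (c < N)%nat -> rsum (fun k => deltaR c k * f k) N = f c.
Proof.
  induction N; intros H. lia. simpl.
  destruct (Nat.eq_dec c N) as [->|ne].
  - rewrite (rsum_ext _ (fun _ => 0)). rewrite rsum_zero. unfold deltaR. rewrite Nat.eqb_refl. ring.
    intros k Hk. unfold deltaR. destruct (Nat.eqb_spec N k). lia. ring.
  - rewrite IHN by lia. unfold deltaR. destruct (Nat.eqb_spec c N). lia. ring.
Qed.

Lemma rsum_le f g N : (forall k, (k < N)%nat -> f k <= g k) -> rsum f N <= rsum g N.
Proof.
  induction N; intros H; simpl. lra.
  assert (rsum f N <= rsum g N) by (apply IHN; intros; apply H; lia).
  assert (f N <= g N) by (apply H; lia). lra.
Qed.
Lemma rsum_nonneg f N : (forall k, (k < N)%nat -> 0 <= f k) -> 0 <= rsum f N.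
Proof.
  intros H. rewrite <- (rsum_zero N). apply rsum_le. auto.
Qed.
Lemma rsum_const c N : rsum (fun _ => c) N = INR N * c.
Proof. induction N. simpl; ring. rewrite S_INR; simpl; rewrite IHN; ring. Qed.
Lemma rsum_single_le f N c : (c < N)%nat -> (forall k, (k < N)%nat -> 0 <= f k) -> f c <= rsum f N.
Proof.
  induction N; intros Hc H. lia. simpl.
  destruct (Nat.eq_dec c N) as [->|ne].
  - assert (0 <= rsum f N) by (apply rsum_nonneg; intros; apply H; lia). lra.
  - assert (f c <= rsum f N) by (apply IHN; [lia| intros; apply H; lia]).
    assert (0 <= f N) by (apply H; lia). lra.
Qed.
Lemma Cmod_csum f N : Cmod (csum f N) <= rsum (fun k => Cmod (f k)) N.
Proof.
  induction N; simpl. rewrite Cmod_0; lra.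
  eapply Rle_trans. apply Cmod_add. lra.
Qed.

Fixpoint lsum (l : list nat) (f : nat -> R) : R :=
  match l with [] => 0 | x :: l' => f x + lsum l' f end.
Lemma lsum_app l1 l2 f : lsum (l1 ++ l2) f = lsum l1 f + lsum l2 f.
Proof. induction l1; simpl. ring. rewrite IHl1; ring. Qed.
Lemma rsum_lsum f N : rsum f N = lsum (seq 0 N) f.
Proof.
  induction N. reflexivity. change (rsum f (S N)) with (rsum f N + f N). rewrite seq_S, lsum_app, IHN. simpl. ring.
Qed.
Lemma lsum_perm l l' f : Permutation l l' -> lsum l f = lsum l' f.
Proof. induction 1; simpl; auto; try ring. rewrite IHPermutation; auto. congruence. Qed.
Lemma lsum_map (g : nat -> nat) l f : lsum (map g l) f = lsum l (fun k => f (g k)).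
Proof. induction l; simpl; auto. rewrite IHl; auto. Qed.

Lemma rsum_reindex (s : nat -> nat) f N :
  (forall k, (k < N)%nat -> (s k < N)%nat) ->
  (forall k l, (k < N)%nat -> (l < N)%nat -> s k = s l -> k = l) ->
  rsum (fun k => f (s k)) N = rsum f N.
Proof.
  intros Hr Hi. rewrite !rsum_lsum, <- lsum_map. apply lsum_perm.
  apply Permutation_map_same_l.
  - apply FinFun.Injective_map_NoDup_in; [|apply seq_NoDup].
    intros x y Hx Hy. apply in_seq in Hx; apply in_seq in Hy. apply Hi; lia.
  - intros y Hy. apply in_map_iff in Hy. destruct Hy as [x [<- Hx]].
    apply in_seq in Hx. apply in_seq. specialize (Hr x). lia.
Qed.
Lemma csum_reindex (s : nat -> nat) f N :
  (forall k, (k < N)%nat -> (s k < N)%nat) ->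
  (forall k l, (k < N)%nat -> (l < N)%nat -> s k = s l -> k = l) ->
  csum (fun k => f (s k)) N = csum f N.
Proof.
  intros Hr Hi. apply Cpx_eq.
  - rewrite !Re_csum. apply (rsum_reindex s (fun k => Re (f k))); auto.
  - rewrite !Im_csum. apply (rsum_reindex s (fun k => Im (f k))); auto.
Qed.

Close Scope nat_scope.
Close Scope R_scope.

Module MC.
Import HB.structures.
Import mathcomp.boot.all_boot mathcomp.algebra.all_algebra mathcomp.reals_stdlib.Rstruct.
Local Open Scope ring_scope.

Definition c2p (z : Cpx) : (Rdefinitions.R * Rdefinitions.R)%type := (Re z, Im z).
Definition p2c (p : (Rdefinitions.R * Rdefinitions.R)%type) : Cpx := mkCpx p.1 p.2.
Lemma c2pK : cancel c2p p2c. Proof. by case. Qed.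
HB.instance Definition _ := Equality.copy Cpx (can_type c2pK).
HB.instance Definition _ := Choice.copy Cpx (can_type c2pK).

Lemma CaddA : associative Cadd. Proof. move=> x y z; rewrite /=; ring. Qed.
Lemma CaddC : commutative Cadd. Proof. move=> x y; ring. Qed.
Lemma Cadd0 : left_id C0 Cadd. Proof. move=> x; ring. Qed.
Lemma CaddN : left_inverse C0 Copp Cadd. Proof. move=> x; ring. Qed.
HB.instance Definition _ := GRing.isZmodule.Build Cpx CaddA CaddC Cadd0 CaddN.
Lemma CmulA : associative Cmul. Proof. move=> x y z; ring. Qed.
Lemma CmulC : commutative Cmul. Proof. move=> x y; ring. Qed.
Lemma Cmul1 : left_id C1 Cmul. Proof. move=> x; ring. Qed.
Lemma CmulD : left_distributive Cmul Cadd. Proof. move=> x y z; ring. Qed.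
Lemma C10 : C1 != C0.
Proof. apply/eqP => H. have : Re C1 = Re C0 by rewrite H. rewrite /=. exact: R1_neq_R0. Qed.
HB.instance Definition _ := GRing.Zmodule_isComNzRing.Build Cpx CmulA CmulC Cmul1 CmulD C10.

Lemma csum_big (f : nat -> Cpx) N : csum f N = \sum_(i < N) f i.
Proof.
  elim: N => [|N IH]; first by rewrite big_ord0.
  by rewrite big_ord_recr /= IH.
Qed.

Lemma complete_mx D (b : nat -> vec) :
  (forall j k, (j < D)%N -> (k < D)%N ->
     csum (fun i => Cmul (Cconj (b j i)) (b k i)) D = deltaC j k) ->
  forall i l, (i < D)%N -> (l < D)%N ->
     csum (fun j => Cmul (b j i) (Cconj (b j l))) D = deltaC i l.
Proof.
  move=> Hon i l Hi Hl.
  pose Q : 'M[Cpx]_D := \matrix_(p < D, q < D) b q p.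
  pose Qa : 'M[Cpx]_D := \matrix_(p < D, q < D) Cconj (b p q).
  have H1 : Qa *m Q = 1%:M.
    apply/matrixP => p q. rewrite !mxE.
    rewrite (eq_bigr (fun k : 'I_D => Cmul (Cconj (b p k)) (b q k))); last first.
      by move=> k _; rewrite !mxE.
    rewrite -(csum_big (fun k => Cmul (Cconj (b p k)) (b q k))) Hon //.
    rewrite /deltaC. case: (PeanoNat.Nat.eqb_spec p q) => [/val_inj ->|ne].
      by rewrite eqxx.
    case: eqP => // E. by case: ne; rewrite E.
  have H2 := mulmx1C H1.
  have := congr1 (fun A : 'M[Cpx]_D => A (Ordinal Hi) (Ordinal Hl)) H2.
  rewrite /= !mxE.
  rewrite (eq_bigr (fun k : 'I_D => Cmul (b k i) (Cconj (b k l)))); last first.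
    by move=> k _; rewrite !mxE.
  rewrite -(csum_big (fun k => Cmul (b k i) (Cconj (b k l)))) => ->.
  rewrite /deltaC. case: eqP => [E|ne]; case: (PeanoNat.Nat.eqb_spec i l) => //.
    by case: E.
  by move=> E; case: ne; apply: val_inj.
Qed.
End MC.

Lemma completeness D (b : nat -> vec) :
  (forall j k, (j < D)%nat -> (k < D)%nat ->
     csum (fun i => Cmul (Cconj (b j i)) (b k i)) D = deltaC j k) ->
  forall i l, (i < D)%nat -> (l < D)%nat ->
     csum (fun j => Cmul (b j i) (Cconj (b j l))) D = deltaC i l.
Proof.
  intros H i l Hi Hl. apply MC.complete_mx;
    try (apply (ssrbool.introT ssrnat.ltP); assumption).
  intros j k Hj Hk. apply H; apply (ssrbool.elimT ssrnat.ltP); assumption.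
Qed.

Close Scope nat_scope.
Close Scope R_scope.
Open Scope R_scope.

Lemma csum_mul f g N M :
  Cmul (csum f N) (csum g M) = csum (fun i => csum (fun j => Cmul (f i) (g j)) M) N.
Proof.
  rewrite <- csum_scal_r. apply csum_ext; intros i _.
  rewrite <- csum_scal. reflexivity.
Qed.

Fixpoint Cpow (z : Cpx) (k : nat) : Cpx :=
  match k with O => C1 | S k' => Cmul z (Cpow z k') end.

Section Eigen.
Variable D : nat.
Variable b : nat -> vec.
Hypothesis Hon : forall j k, (j < D)%nat -> (k < D)%nat ->
  cinner D (b j) (b k) = if Nat.eqb j k then C1 else C0.

Lemma Hon' : forall j k, (j < D)%nat -> (k < D)%nat ->
  csum (fun i => Cmul (Cconj (b j i)) (b k i)) D = deltaC j k.
Proof. exact Hon. Qed.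
Lemma Hcomp : forall i l, (i < D)%nat -> (l < D)%nat ->
     csum (fun j => Cmul (b j i) (Cconj (b j l))) D = deltaC i l.
Proof. apply completeness, Hon'. Qed.

Definition coef (v : vec) (c : nat) : Cpx := cinner D (b c) v.
Definition hat (X : mat) (c a : nat) : Cpx := cinner D (b c) (mvmul D X (b a)).

Lemma expansion v i : (i < D)%nat -> v i = csum (fun c => Cmul (coef v c) (b c i)) D.
Proof.
  intros Hi. unfold coef, cinner.
  transitivity (csum (fun x => Cmul (deltaC i x) (v x)) D).
  { symmetry; apply csum_delta_l; auto. }
  rewrite (csum_ext (fun c => Cmul _ (b c i))
    (fun c => csum (fun x => Cmul (Cmul (Cconj (b c x)) (v x)) (b c i)) D)).
  2:{ intros c _. rewrite <- csum_scal_r. reflexivity. }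
  rewrite csum_swap. apply csum_ext. intros x Hx.
  rewrite (csum_ext _ (fun c => Cmul (v x) (Cmul (b c i) (Cconj (b c x))))).
  2:{ intros; ring. }
  rewrite csum_scal, Hcomp by auto. ring.
Qed.

Lemma parseval v : rsum (fun c => Cnorm2 (coef v c)) D = rsum (fun i => Cnorm2 (v i)) D.
Proof.
  assert (Cofreal (rsum (fun c => Cnorm2 (coef v c)) D) = Cofreal (rsum (fun i => Cnorm2 (v i)) D)).
  2:{ apply (f_equal Re) in H. simpl in H. exact H. }
  rewrite <- !csum_ofreal.
  rewrite (csum_ext (fun k => Cofreal (Cnorm2 (v k))) (fun x => Cmul (Cconj (v x)) (v x)))
    by (intros; rewrite Cmul_conj_l; auto).
  rewrite (csum_ext (fun k => Cofreal (Cnorm2 (coef v k)))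
     (fun c => csum (fun x => csum (fun y => Cmul (Cmul (Cconj (v x)) (v y)) (Cmul (b c x) (Cconj (b c y)))) D) D)).
  2:{ intros c _. rewrite <- Cmul_conj_l. unfold coef, cinner. rewrite Cconj_csum, csum_mul.
      apply csum_ext; intros x _; apply csum_ext; intros y _. rewrite Cconj_mul, Cconj_conj. ring. }
  rewrite csum_swap. apply csum_ext; intros x Hx.
  rewrite csum_swap.
  rewrite (csum_ext _ (fun y => Cmul (deltaC x y) (Cmul (Cconj (v x)) (v y)))).
  2:{ intros y Hy. rewrite csum_scal, Hcomp by auto. ring. }
  rewrite csum_delta_l; auto.
Qed.

Lemma mvmul_assoc X Y v i : mvmul D (mmul D X Y) v i = mvmul D X (mvmul D Y v) i.
Proof.
  unfold mvmul, mmul.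
  rewrite (csum_ext (fun k => Cmul (csum _ D) (v k))
     (fun k => csum (fun j => Cmul (X i j) (Cmul (Y j k) (v k))) D)).
  2:{ intros k _. rewrite <- csum_scal_r. apply csum_ext; intros; ring. }
  rewrite csum_swap. apply csum_ext; intros j _. rewrite csum_scal. auto.
Qed.

Lemma hat_expand X c e :
  hat X c e = csum (fun i => csum (fun k => Cmul (Cconj (b c i)) (Cmul (X i k) (b e k))) D) D.
Proof.
  unfold hat, cinner. apply csum_ext; intros i _. unfold mvmul. rewrite <- csum_scal. auto.
Qed.

Lemma hat_mmul X Y c a : (c < D)%nat -> (a < D)%nat ->
  hat (mmul D X Y) c a = csum (fun e => Cmul (hat X c e) (hat Y e a)) D.
Proof.
  intros Hc Ha. unfold hat at 1.
  unfold cinner at 1.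
  rewrite (csum_ext _ (fun i => Cmul (Cconj (b c i)) (mvmul D X (mvmul D Y (b a)) i)))
    by (intros; rewrite mvmul_assoc; auto).
  rewrite (csum_ext (fun i => Cmul (Cconj (b c i)) (mvmul D X (mvmul D Y (b a)) i))
    (fun i => csum (fun k => Cmul (Cconj (b c i)) (Cmul (X i k)
       (csum (fun e => Cmul (hat Y e a) (b e k)) D))) D)).
  2:{ intros i _. change (mvmul D X ?w i) with (csum (fun k => Cmul (X i k) (w k)) D). rewrite <- csum_scal. apply csum_ext; intros k Hk.
      rewrite (expansion (mvmul D Y (b a)) k Hk). reflexivity. }
  transitivity (csum (fun e => Cmul (hat Y e a) (hat X c e)) D).
  2:{ apply csum_ext; intros; ring. }
  rewrite (csum_ext (fun e => Cmul (hat Y e a) (hat X c e))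
    (fun e => csum (fun i => csum (fun k => Cmul (Cconj (b c i)) (Cmul (X i k) (Cmul (hat Y e a) (b e k)))) D) D)).
  2:{ intros e _. rewrite (hat_expand X c e). rewrite <- csum_scal. apply csum_ext; intros i _.
      rewrite <- csum_scal. apply csum_ext; intros; ring. }
  symmetry. rewrite csum_swap. apply csum_ext; intros i _.
  rewrite csum_swap. apply csum_ext; intros k _.
  rewrite csum_scal, csum_scal. auto.
Qed.

Lemma trace_hat Y : ctrace D Y = csum (fun a => hat Y a a) D.
Proof.
  unfold ctrace, hat, cinner, mvmul.
  rewrite (csum_ext (fun a => csum (fun i => Cmul (Cconj (b a i)) _) D)
    (fun a => csum (fun i => csum (fun j => Cmul (Y i j) (Cmul (b a j) (Cconj (b a i)))) D) D)).
  2:{ intros a _. apply csum_ext; intros i _. rewrite <- csum_scal. apply csum_ext; intros; ring. }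
  rewrite csum_swap. apply csum_ext; intros i Hi.
  rewrite csum_swap.
  rewrite (csum_ext _ (fun j => Cmul (deltaC j i) (Y i j))).
  2:{ intros j Hj. rewrite csum_scal, Hcomp by auto. ring. }
  rewrite csum_delta_r; auto.
Qed.

Lemma hat_adj X c a : hat (madj X) c a = Cconj (hat X a c).
Proof.
  unfold hat, cinner, mvmul, madj.
  rewrite Cconj_csum.
  rewrite (csum_ext (fun i => Cconj (Cmul _ _))
    (fun j => csum (fun i => Cmul (b a j) (Cmul (Cconj (X j i)) (Cconj (b c i)))) D)).
  2:{ intros j _. rewrite Cconj_mul, Cconj_conj, Cconj_csum, <- csum_scal.
      apply csum_ext; intros; rewrite Cconj_mul; ring. }
  rewrite csum_swap. apply csum_ext; intros i _.
  rewrite <- csum_scal. apply csum_ext; intros; ring.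
Qed.

Lemma hat_scale z X c a : hat (mscale z X) c a = Cmul z (hat X c a).
Proof.
  unfold hat, cinner, mvmul, mscale.
  rewrite <- csum_scal. apply csum_ext; intros i _.
  rewrite (csum_ext _ (fun k => Cmul z (Cmul (X i k) (b a k)))) by (intros; ring).
  rewrite csum_scal. ring.
Qed.

Lemma hat_mid c a : (c < D)%nat -> (a < D)%nat -> hat mid c a = deltaC c a.
Proof.
  intros Hc Ha. unfold hat.
  rewrite <- Hon'; auto. unfold cinner. apply csum_ext; intros i Hi. f_equal.
  unfold mvmul, mid.
  rewrite (csum_ext _ (fun k => Cmul (deltaC i k) (b a k))).
  apply csum_delta_l; auto. intros; reflexivity.
Qed.

Lemma hat_mpow X k (w : nat -> Cpx) : (forall c e, (c < D)%nat -> (e < D)%nat -> hat X c e = Cmul (deltaC c e) (w e)) ->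
  forall c a, (c < D)%nat -> (a < D)%nat -> hat (mpow D X k) c a = Cmul (deltaC c a) (Cpow (w a) k).
Proof.
  intros HX. induction k; intros c a Hc Ha.
  - simpl. rewrite hat_mid by auto. ring.
  - simpl mpow. rewrite hat_mmul by auto.
    rewrite (csum_ext _ (fun e => Cmul (deltaC c e) (Cmul (w e) (Cmul (deltaC e a) (Cpow (w a) k))))).
    2:{ intros e He. rewrite HX, IHk by auto. ring. }
    rewrite csum_delta_l by auto. simpl. unfold deltaC.
    destruct (Nat.eqb_spec c a); subst; ring.
Qed.

Lemma hat_ext X Y c a : (forall i j, (i < D)%nat -> (j < D)%nat -> X i j = Y i j) ->
  hat X c a = hat Y c a.
Proof.
  intros HXY. unfold hat, cinner, mvmul. apply csum_ext; intros i Hi. f_equal.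
  apply csum_ext; intros j Hj. rewrite HXY; auto.
Qed.

End Eigen.

Close Scope nat_scope.
Close Scope R_scope.
Open Scope R_scope.

Definition expi (th : R) : Cpx := mkCpx (cos th) (sin th).

Lemma cos_series th : Un_cv (fun M => sum_f_R0 (fun i => cos_n i * (Rsqr th) ^ i) M) (cos th).
Proof.
  unfold cos. destruct (exist_cos (Rsqr th)) as [l Hl]. exact Hl.
Qed.
Lemma sin_series th : Un_cv (fun M => th * sum_f_R0 (fun i => sin_n i * (Rsqr th) ^ i) M) (sin th).
Proof.
  unfold sin. destruct (exist_sin (Rsqr th)) as [l Hl].
  apply CV_mult. intros e He; exists 0%nat; intros; unfold R_dist; rewrite Rminus_diag, Rabs_R0; auto.
  exact Hl.
Qed.

Lemma Cpow_S z k : Cpow z (S k) = Cmul z (Cpow z k). Proof. reflexivity. Qed.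

Lemma Cpow_even th m : Cpow (mkCpx 0 th) (2 * m) = Cofreal ((-1) ^ m * th ^ (2 * m)).
Proof.
  induction m.
  - simpl. apply Cpx_eq; simpl; ring.
  - replace (2 * S m)%nat with (S (S (2 * m))) by lia. rewrite !Cpow_S, IHm.
    apply Cpx_eq; simpl; ring.
Qed.
Lemma Cpow_odd th m : Cpow (mkCpx 0 th) (S (2 * m)) = mkCpx 0 ((-1) ^ m * th ^ (S (2 * m))).
Proof.
  rewrite Cpow_S, Cpow_even. apply Cpx_eq; simpl; ring.
Qed.

Definition psum (th : R) (N : nat) : Cpx :=
  csum (fun k => Crscale (/ INR (fact k)) (Cpow (mkCpx 0 th) k)) (S N).

Definition Cser (th : R) M := sum_f_R0 (fun i => cos_n i * (Rsqr th) ^ i) M.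
Definition Sser (th : R) M := th * sum_f_R0 (fun i => sin_n i * (Rsqr th) ^ i) M.

Definition pterm th k := Crscale (/ INR (fact k)) (Cpow (mkCpx 0 th) k).
Lemma psum_S th N : psum th (S N) = Cadd (psum th N) (pterm th (S N)).
Proof. reflexivity. Qed.
Lemma pterm_even th m : pterm th (2 * m) = Cofreal ((-1) ^ m * th ^ (2 * m) / INR (fact (2 * m))).
Proof. unfold pterm. rewrite Cpow_even. assert (INR (fact (2*m)) <> 0) by (apply not_0_INR, fact_neq_0).
  apply Cpx_eq; unfold Crscale, Cofreal; cbn [Re Im]; field; auto. Qed.
Lemma pterm_odd th m : pterm th (S (2 * m)) = mkCpx 0 ((-1) ^ m * th ^ (S (2 * m)) / INR (fact (S (2 * m)))).
Proof. unfold pterm. rewrite Cpow_odd. assert (INR (fact (S (2*m))) <> 0) by (apply not_0_INR, fact_neq_0).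
  apply Cpx_eq; unfold Crscale, Cofreal; cbn [Re Im]; field; auto. Qed.

Lemma sq_pow th k : (Rsqr th)^k = th^(2*k).
Proof. rewrite pow_mult. unfold Rsqr. f_equal. simpl; ring. Qed.

Lemma psum_formula th M :
  Re (psum th (2 * M)) = Cser th M /\ Re (psum th (S (2 * M))) = Cser th M /\
  Im (psum th (S (2 * M))) = Sser th M /\
  Im (psum th (2 * M)) = match M with O => 0 | S M' => Sser th M' end.
Proof.
  induction M.
  - unfold psum, Cser, Sser, cos_n, sin_n; simpl. repeat split; field.
  - destruct IHM as [H1 [H2 [H3 H4]]].
    assert (A: psum th (2 * S M) = Cadd (psum th (S (2*M))) (pterm th (2 * S M))).
    { replace (2 * S M)%nat with (S (S (2*M))) at 1 by lia. rewrite psum_S. repeat f_equal. lia. }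
    assert (B: psum th (S (2 * S M)) = Cadd (psum th (2 * S M)) (pterm th (S (2 * S M)))) by apply psum_S.
    rewrite B, A, pterm_even, pterm_odd. unfold Cofreal. cbn [Re Im Cadd].
    rewrite H2, H3. unfold Cser, Sser. cbn [sum_f_R0].
    assert (F1 : INR (fact (2 * S M)) <> 0) by (apply not_0_INR, fact_neq_0).
    assert (F2 : INR (fact (S (2 * S M))) <> 0) by (apply not_0_INR, fact_neq_0).
    unfold cos_n, sin_n. rewrite !sq_pow.
    replace (2 * S M + 1)%nat with (S (2 * S M)) by lia.
    replace (th ^ (S (2 * S M))) with (th * th ^ (2 * S M)) by (simpl; ring).
    repeat split; field; auto.
Qed.

Definition Ccv (u : nat -> Cpx) (l : Cpx) : Prop :=
  Un_cv (fun N => Re (u N)) (Re l) /\ Un_cv (fun N => Im (u N)) (Im l).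

Lemma psum_cv th : Ccv (psum th) (expi th).
Proof.
  split; intros eps Heps.
  - destruct (cos_series th eps Heps) as [N0 HN0]. exists (2 * N0)%nat. intros N HN.
    destruct (Nat.Even_or_Odd N) as [[k Hk]|[k Hk]]; subst N.
    + destruct (psum_formula th k) as [F _]. simpl Re at 2. rewrite F. apply HN0. unfold ge in *; lia.
    + replace (2 * k + 1)%nat with (S (2 * k)) by lia.
      destruct (psum_formula th k) as [_ [F _]]. simpl Re at 2. rewrite F. apply HN0. unfold ge in *; lia.
  - destruct (sin_series th eps Heps) as [N0 HN0]. exists (S (2 * N0))%nat. intros N HN.
    destruct (Nat.Even_or_Odd N) as [[k Hk]|[k Hk]]; subst N.
    + destruct (psum_formula th k) as [_ [_ [_ F]]]. simpl Im at 2. rewrite F.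
      destruct k. unfold ge in *; lia. apply HN0. unfold ge in *; lia.
    + replace (2 * k + 1)%nat with (S (2 * k)) by lia.
      destruct (psum_formula th k) as [_ [_ [F _]]]. simpl Im at 2. rewrite F. apply HN0. unfold ge in *; lia.
Qed.

Lemma Ccv_unique u l1 l2 : Ccv u l1 -> Ccv u l2 -> l1 = l2.
Proof.
  intros [H1 H2] [H3 H4]. apply Cpx_eq; eapply UL_sequence; eauto.
Qed.
Lemma Ccv_ext u v l : (forall N, u N = v N) -> Ccv u l -> Ccv v l.
Proof.
  intros E [H1 H2]. split; intros e He; [destruct (H1 e He) as [N HN]|destruct (H2 e He) as [N HN]];
  exists N; intros n Hn; rewrite <- E; auto.
Qed.
Lemma Ccv_add u v l m : Ccv u l -> Ccv v m -> Ccv (fun N => Cadd (u N) (v N)) (Cadd l m).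
Proof.
  intros [H1 H2] [H3 H4]. split; simpl; apply CV_plus; auto.
Qed.
Lemma Ccv_const c : Ccv (fun _ => c) c.
Proof.
  split; intros e He; exists 0%nat; intros; unfold R_dist; rewrite Rminus_diag, Rabs_R0; auto.
Qed.
Lemma Ccv_mul_l w u l : Ccv u l -> Ccv (fun N => Cmul w (u N)) (Cmul w l).
Proof.
  intros [H1 H2]. destruct (Ccv_const w) as [H3 H4].
  split; simpl; [apply CV_minus | apply CV_plus]; apply CV_mult; auto.
Qed.
Lemma Ccv_csum (u : nat -> nat -> Cpx) (l : nat -> Cpx) K :
  (forall k, (k < K)%nat -> Ccv (fun N => u k N) (l k)) ->
  Ccv (fun N => csum (fun k => u k N) K) (csum l K).
Proof.
  induction K; intros H; simpl.
  - apply Ccv_const.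
  - apply Ccv_add. apply IHK; intros; apply H; lia. apply H; lia.
Qed.

Close Scope nat_scope.
Close Scope R_scope.
Open Scope R_scope.

Section Eigen2.
Variable D : nat.
Variable b : nat -> vec.
Hypothesis Hon : forall j k, (j < D)%nat -> (k < D)%nat ->
  cinner D (b j) (b k) = if Nat.eqb j k then C1 else C0.
Variable H : mat.
Variable E : nat -> R.
Hypothesis Heig : forall j i, (j < D)%nat -> (i < D)%nat ->
        mvmul D H (b j) i = Cmul (Cofreal (E j)) (b j i).

Lemma hatH c e : (c < D)%nat -> (e < D)%nat -> hat D b H c e = Cmul (deltaC c e) (Cofreal (E e)).
Proof.
  intros Hc He. unfold hat.
  transitivity (Cmul (Cofreal (E e)) (cinner D (b c) (b e))).
  - unfold cinner. rewrite <- csum_scal. apply csum_ext; intros i Hi. rewrite Heig by auto. ring.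
  - rewrite Hon by auto. unfold deltaC. destruct (Nat.eqb c e); ring.
Qed.

Lemma hat_expH z k c a : (c < D)%nat -> (a < D)%nat ->
  hat D b (mpow D (mscale z H) k) c a = Cmul (deltaC c a) (Cpow (Cmul z (Cofreal (E a))) k).
Proof.
  intros Hc Ha. apply (hat_mpow D b Hon _ k (fun e => Cmul z (Cofreal (E e)))); auto.
  intros c' e Hc' He. rewrite hat_scale, hatH by auto. ring.
Qed.

Lemma hatU z U : is_mexp D (mscale z H) U -> Re z = 0 ->
  forall c a, (c < D)%nat -> (a < D)%nat ->
  hat D b U c a = Cmul (deltaC c a) (expi (Im z * E a)).
Proof.
  intros HU Hz c a Hc Ha.
  set (X := mscale z H).
  set (PN := fun N i j => csum (fun k => Crscale (/ INR (fact k)) (mpow D X k i j)) (S N)).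
  assert (C1' : Ccv (fun N => csum (fun i => csum (fun j =>
      Cmul (Cmul (Cconj (b c i)) (b a j)) (PN N i j)) D) D) (hat D b U c a)).
  { rewrite hat_expand.
    apply Ccv_ext with (u := fun N => csum (fun i => csum (fun j =>
      Cmul (Cmul (Cconj (b c i)) (b a j)) (PN N i j)) D) D). reflexivity.
    replace (csum (fun i => csum (fun k => Cmul (Cconj (b c i)) (Cmul (U i k) (b a k))) D) D)
      with (csum (fun i => csum (fun j => Cmul (Cmul (Cconj (b c i)) (b a j)) (U i j)) D) D).
    2:{ apply csum_ext; intros; apply csum_ext; intros; ring. }
    apply Ccv_csum; intros i Hi. apply Ccv_csum; intros j Hj.
    apply Ccv_mul_l. destruct (HU i j Hi Hj) as [h1 h2]. split; auto. }
  assert (C2 : Ccv (fun N => csum (fun i => csum (fun j =>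
      Cmul (Cmul (Cconj (b c i)) (b a j)) (PN N i j)) D) D)
      (Cmul (deltaC c a) (expi (Im z * E a)))).
  { apply Ccv_ext with (u := fun N => Cmul (deltaC c a) (psum (Im z * E a) N)).
    2:{ apply Ccv_mul_l, psum_cv. }
    intros N. unfold PN.
    rewrite (csum_ext _ (fun i => csum (fun k => csum (fun j =>
      Cmul (Cofreal (/ INR (fact k))) (Cmul (Cconj (b c i)) (Cmul (mpow D X k i j) (b a j)))) D) (S N)) D).
    2:{ intros i _.
        rewrite (csum_ext _ (fun j => csum (fun k => Cmul (Cofreal (/ INR (fact k)))
           (Cmul (Cconj (b c i)) (Cmul (mpow D X k i j) (b a j)))) (S N))).
        - apply csum_swap.
        - intros j _. rewrite <- csum_scal. apply csum_ext; intros k _.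
          rewrite Crscale_mul. ring. }
    rewrite csum_swap.
    unfold psum. rewrite <- csum_scal. apply csum_ext; intros k _.
    rewrite (csum_ext _ (fun i => Cmul (Cofreal (/ INR (fact k))) (csum (fun j => Cmul (Cconj (b c i)) (Cmul (mpow D X k i j) (b a j))) D))).
    2:{ intros; rewrite csum_scal; auto. }
    rewrite csum_scal, <- hat_expand. unfold X. rewrite hat_expH by auto.
    unfold pterm. rewrite Crscale_mul.
    replace (Cmul z (Cofreal (E a))) with (mkCpx 0 (Im z * E a)).
    ring. destruct z; simpl in *; subst. apply Cpx_eq; simpl; ring. }
  eapply Ccv_unique; eauto.
Qed.
End Eigen2.

Close Scope nat_scope.
Close Scope R_scope.
Open Scope R_scope.

Module CQ.
Import Coquelicot.Coquelicot.

Definition avgcv (f : R -> Cpx) (L : Cpx) : Prop :=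
  (forall a b, ex_RInt (fun t => Defs.Re (f t)) a b) /\
  (forall a b, ex_RInt (fun t => Defs.Im (f t)) a b) /\
  forall eps, 0 < eps -> exists T, forall tau, T < tau ->
    Rabs (RInt (fun t => Defs.Re (f t)) 0 tau / tau - Defs.Re L) < eps /\
    Rabs (RInt (fun t => Defs.Im (f t)) 0 tau / tau - Defs.Im L) < eps.

Lemma avgcv_time f L : avgcv f L -> time_avg_cv f L.
Proof.
  intros [H1 [H2 H3]].
  exists (fun tau => ex_RInt_Reals_0 _ _ _ (H1 0 tau)).
  exists (fun tau => ex_RInt_Reals_0 _ _ _ (H2 0 tau)).
  intros eps Heps. destruct (H3 eps Heps) as [T HT]. exists T. intros tau Ht.
  rewrite <- !RInt_Reals. apply HT; auto.
Qed.

Lemma avgcv_ext f g L : (forall t, f t = g t) -> avgcv f L -> avgcv g L.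
Proof.
  intros E. assert (f = g) by (apply functional_extensionality; auto). subst; auto.
Qed.

Lemma avgcv_add f g L1 L2 : avgcv f L1 -> avgcv g L2 ->
  avgcv (fun t => Cadd (f t) (g t)) (Cadd L1 L2).
Proof.
  intros [F1 [F2 F3]] [G1 [G2 G3]]. split; [|split].
  - intros a b. simpl. apply (ex_RInt_plus (fun t => Defs.Re (f t)) (fun t => Defs.Re (g t))); auto.
  - intros a b. simpl. apply (ex_RInt_plus (fun t => Defs.Im (f t)) (fun t => Defs.Im (g t))); auto.
  - intros eps Heps. destruct (F3 (eps/2)) as [T1 HT1]. lra. destruct (G3 (eps/2)) as [T2 HT2]. lra.
    exists (Rmax T1 T2). intros tau Ht.
    assert (Ht1 : T1 < tau) by (eapply Rle_lt_trans; [apply Rmax_l|eauto]).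
    assert (Ht2 : T2 < tau) by (eapply Rle_lt_trans; [apply Rmax_r|eauto]).
    destruct (HT1 tau Ht1) as [a1 a2]. destruct (HT2 tau Ht2) as [b1 b2].
    assert (R1 : RInt (fun t => Defs.Re (Cadd (f t) (g t))) 0 tau =
       RInt (fun t => Defs.Re (f t)) 0 tau + RInt (fun t => Defs.Re (g t)) 0 tau).
    { exact (RInt_plus (fun t => Defs.Re (f t)) (fun t => Defs.Re (g t)) 0 tau (F1 0 tau) (G1 0 tau)). }
    assert (R2 : RInt (fun t => Defs.Im (Cadd (f t) (g t))) 0 tau =
       RInt (fun t => Defs.Im (f t)) 0 tau + RInt (fun t => Defs.Im (g t)) 0 tau).
    { exact (RInt_plus (fun t => Defs.Im (f t)) (fun t => Defs.Im (g t)) 0 tau (F2 0 tau) (G2 0 tau)). }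
    rewrite R1, R2. simpl.
    unfold Rdiv in *. split.
    + replace ((RInt (fun t => Defs.Re (f t)) 0 tau + RInt (fun t => Defs.Re (g t)) 0 tau) * / tau -
        (Defs.Re L1 + Defs.Re L2)) with
       ((RInt (fun t => Defs.Re (f t)) 0 tau * / tau - Defs.Re L1) + (RInt (fun t => Defs.Re (g t)) 0 tau * / tau - Defs.Re L2)) by ring.
      eapply Rle_lt_trans. apply Rabs_triang. lra.
    + replace ((RInt (fun t => Defs.Im (f t)) 0 tau + RInt (fun t => Defs.Im (g t)) 0 tau) * / tau -
        (Defs.Im L1 + Defs.Im L2)) with
       ((RInt (fun t => Defs.Im (f t)) 0 tau * / tau - Defs.Im L1) + (RInt (fun t => Defs.Im (g t)) 0 tau * / tau - Defs.Im L2)) by ring.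
      eapply Rle_lt_trans. apply Rabs_triang. lra.
Qed.

Lemma avgcv_const c : avgcv (fun _ => c) c.
Proof.
  split; [|split].
  - intros a b. apply ex_RInt_const.
  - intros a b. apply ex_RInt_const.
  - intros eps Heps. exists 0. intros tau Ht.
    rewrite !RInt_const. unfold scal; simpl; unfold mult; simpl.
    replace ((tau - 0) * Defs.Re c / tau - Defs.Re c) with 0 by (field; lra).
    replace ((tau - 0) * Defs.Im c / tau - Defs.Im c) with 0 by (field; lra).
    rewrite Rabs_R0; lra.
Qed.

Lemma trig_RInt p q w a b : w <> 0 ->
  is_RInt (fun t => p * cos (w * t) + q * sin (w * t)) a b
    ((p * sin (w * b) - q * cos (w * b)) / w - (p * sin (w * a) - q * cos (w * a)) / w).
Proof.
  intros Hw.
  apply (is_RInt_derive (fun t => (p * sin (w * t) - q * cos (w * t)) / w)).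
  - intros x _. auto_derive; auto. field; auto.
  - intros x _. apply (ex_derive_continuous (K:=R_AbsRing) (V:=R_NormedModule)). auto_derive; auto.
Qed.

Lemma trig_avg p q w : w <> 0 ->
  (forall a b, ex_RInt (fun t => p * cos (w * t) + q * sin (w * t)) a b) /\
  forall eps, 0 < eps -> exists T, forall tau, T < tau ->
    Rabs (RInt (fun t => p * cos (w * t) + q * sin (w * t)) 0 tau / tau) < eps.
Proof.
  intros Hw. split.
  - intros a b. eexists. apply trig_RInt; auto.
  - intros eps Heps. set (K := (Rabs p + Rabs q + Rabs q) / Rabs w).
    assert (Hwp : 0 < Rabs w) by (apply Rabs_pos_lt; auto).
    assert (HK : 0 <= K) by (unfold K; apply Rmult_le_pos;
      [generalize (Rabs_pos p) (Rabs_pos q); lra | left; apply Rinv_0_lt_compat; auto]).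
    exists (K / eps). intros tau Ht.
    assert (Htau : 0 < tau). { assert (0 <= K / eps) by (apply Rmult_le_pos; [auto| left; apply Rinv_0_lt_compat; auto]). lra. }
    rewrite (is_RInt_unique _ _ _ _ (trig_RInt p q w 0 tau Hw)).
    rewrite Rmult_0_r, sin_0, cos_0.
    assert (B : Rabs ((p * sin (w * tau) - q * cos (w * tau)) / w - (p * 0 - q * 1) / w) <= K).
    { replace ((p * sin (w * tau) - q * cos (w * tau)) / w - (p * 0 - q * 1) / w)
        with ((p * sin (w * tau) - q * cos (w * tau) + q) / w) by (field; auto).
      unfold Rdiv. rewrite Rabs_mult, Rabs_inv. unfold K. unfold Rdiv.
      apply Rmult_le_compat_r. left; apply Rinv_0_lt_compat; auto.
      eapply Rle_trans. apply Rabs_triang. eapply Rle_trans. apply Rplus_le_compat_r. apply Rabs_triang.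
      rewrite Rabs_Ropp, !Rabs_mult.
      generalize (Rabs_pos p) (Rabs_pos q) (SIN_bound (w * tau)) (COS_bound (w * tau)).
      intros. assert (Rabs (sin (w * tau)) <= 1) by (apply Rabs_le; lra).
      assert (Rabs (cos (w * tau)) <= 1) by (apply Rabs_le; lra). nra. }
    unfold Rdiv at 1. rewrite Rabs_mult, Rabs_inv, (Rabs_right tau) by lra.
    apply (Rmult_lt_reg_r tau); auto. rewrite Rmult_assoc, Rinv_l, Rmult_1_r by lra.
    apply Rle_lt_trans with K; auto.
    apply (Rmult_lt_reg_r (/ eps)). apply Rinv_0_lt_compat; auto.
    replace (eps * tau * / eps) with tau by (field; lra). auto.
Qed.

Lemma avgcv_exp c w : w <> 0 -> avgcv (fun t => Cmul c (expi (w * t))) C0.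
Proof.
  intros Hw.
  destruct (trig_avg (Defs.Re c) (- Defs.Im c) w Hw) as [A1 A2].
  destruct (trig_avg (Defs.Im c) (Defs.Re c) w Hw) as [B1 B2].
  assert (E1 : (fun t => Defs.Re (Cmul c (expi (w * t)))) = (fun t => Defs.Re c * cos (w * t) + - Defs.Im c * sin (w * t))).
  { apply functional_extensionality; intros t; simpl; ring. }
  assert (E2 : (fun t => Defs.Im (Cmul c (expi (w * t)))) = (fun t => Defs.Im c * cos (w * t) + Defs.Re c * sin (w * t))).
  { apply functional_extensionality; intros t; simpl; ring. }
  split; [|split].
  - rewrite E1; auto.
  - rewrite E2; auto.
  - intros eps Heps. destruct (A2 eps Heps) as [T1 H1]. destruct (B2 eps Heps) as [T2 H2].
    exists (Rmax T1 T2). intros tau Ht. rewrite E1, E2. simpl Defs.Re; simpl Defs.Im. rewrite !Rminus_0_r.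
    split; [apply H1 | apply H2]; eapply Rle_lt_trans; eauto; [apply Rmax_l | apply Rmax_r].
Qed.

Lemma avgcv_term c w :
  avgcv (fun t => Cmul c (expi (w * t))) (if Req_EM_T w 0 then c else C0).
Proof.
  destruct (Req_EM_T w 0) as [->|Hw].
  - apply avgcv_ext with (fun _ => c). intros t. rewrite Rmult_0_l. unfold expi. rewrite cos_0, sin_0.
    apply Cpx_eq; simpl; ring. apply avgcv_const.
  - apply avgcv_exp; auto.
Qed.

Lemma avgcv_csum (f : nat -> R -> Cpx) (L : nat -> Cpx) N :
  (forall k, (k < N)%nat -> avgcv (f k) (L k)) ->
  avgcv (fun t => csum (fun k => f k t) N) (csum L N).
Proof.
  induction N; intros H; simpl.
  - apply avgcv_const.
  - apply avgcv_add. apply IHN; intros; apply H; lia. apply H; lia.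
Qed.
End CQ.

Close Scope nat_scope.
Close Scope R_scope.
Open Scope nat_scope.

Section Digits.
Variable d : nat.
Hypothesis Hd : d <> 0.

Lemma dig_lt k x : dig d k x < d.
Proof. unfold dig. apply Nat.mod_upper_bound; auto. Qed.

Lemma dig_S k x : dig d (S k) x = dig d k (x / d).
Proof. unfold dig. rewrite Nat.pow_succ_r', Nat.Div0.div_div. reflexivity. Qed.
Lemma dig_0 x : dig d 0 x = x mod d.
Proof. unfold dig. rewrite Nat.pow_0_r, Nat.div_1_r. reflexivity. Qed.

Lemma pow_pos k : d ^ k <> 0.
Proof. apply Nat.pow_nonzero; auto. Qed.

Lemma dig_ext n : forall x y, x < d ^ n -> y < d ^ n ->
  (forall k, k < n -> dig d k x = dig d k y) -> x = y.
Proof.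
  induction n; intros x y Hx Hy H.
  - simpl in *. lia.
  - rewrite (Nat.div_mod_eq x d), (Nat.div_mod_eq y d).
    assert (E0 := H 0 ltac:(lia)). rewrite !dig_0 in E0. rewrite E0.
    f_equal. f_equal. apply IHn.
    + apply Nat.Div0.div_lt_upper_bound. rewrite <- Nat.pow_succ_r'. auto.
    + apply Nat.Div0.div_lt_upper_bound. rewrite <- Nat.pow_succ_r'. auto.
    + intros k Hk. rewrite <- !dig_S. apply H. lia.
Qed.

Fixpoint num (c : nat -> nat) (n : nat) : nat :=
  match n with O => 0 | S n' => num c n' + c n' * d ^ n' end.

Lemma num_lt c n : (forall k, k < n -> c k < d) -> num c n < d ^ n.
Proof.
  induction n; intros H; simpl. lia.
  assert (num c n < d ^ n) by (apply IHn; intros; apply H; lia).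
  assert (c n < d) by (apply H; lia).
  assert (c n * d ^ n <= (d - 1) * d ^ n) by (apply Nat.mul_le_mono_r; lia).
  assert ((d - 1) * d ^ n + d ^ n = d * d ^ n) by (destruct d; [lia| simpl; rewrite Nat.sub_0_r; ring]).
  lia.
Qed.

Lemma dig_num c n : (forall k, k < n -> c k < d) -> forall k, k < n -> dig d k (num c n) = c k.
Proof.
  induction n; intros H k Hk. lia. simpl.
  assert (Hn : num c n < d ^ n) by (apply num_lt; intros; apply H; lia).
  destruct (Nat.eq_dec k n) as [->|Hne].
  - unfold dig. rewrite Nat.div_add by apply pow_pos.
    rewrite Nat.div_small by auto. simpl. apply Nat.mod_small. apply H; lia.
  - assert (Hkn : k < n) by lia.
    unfold dig.
    replace (c n * d ^ n) with ((c n * d ^ (n - S k)) * d * d ^ k).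
    2:{ assert (E : d ^ n = d ^ (n - S k) * d * d ^ k).
        { replace n with (n - S k + 1 + k) at 1 by lia. rewrite !Nat.pow_add_r, Nat.pow_1_r. reflexivity. }
        rewrite E. ring. }
    rewrite Nat.div_add by apply pow_pos. rewrite Nat.Div0.mod_add.
    fold (dig d k (num c n)). apply IHn; auto.
Qed.

End Digits.

Section Sites.
Variable n : nat.
Hypothesis Hn : n <> 0.

Lemma mod_plus_n j : (j + n) mod n = j mod n.
Proof. replace (j + n) with (j + 1 * n) by lia. apply Nat.Div0.mod_add. Qed.

Lemma sig_inv k s : k < n -> ((k + s) mod n + (n - s mod n)) mod n = k.
Proof.
  intros Hk. rewrite Nat.Div0.add_mod_idemp_l.
  assert (Hs := Nat.div_mod_eq s n). assert (Hr := Nat.mod_upper_bound s n Hn).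
  set (q := s / n) in *. set (r := s mod n) in *.
  replace (k + s + (n - r)) with (k + (q + 1) * n) by (rewrite Nat.mul_add_distr_r, Nat.mul_1_l, (Nat.mul_comm q n); lia).
  rewrite Nat.Div0.mod_add. apply Nat.mod_small; auto.
Qed.

Lemma sig_inj k k' s : k < n -> k' < n -> (k + s) mod n = (k' + s) mod n -> k = k'.
Proof.
  intros Hk Hk' E. rewrite <- (sig_inv k s Hk), <- (sig_inv k' s Hk'), E. auto.
Qed.

Lemma sig_surj j s : j < n -> exists k, k < n /\ (k + s) mod n = j.
Proof.
  intros Hj. exists ((j + (n - s mod n)) mod n). split. apply Nat.mod_upper_bound; auto.
  rewrite Nat.Div0.add_mod_idemp_l.
  assert (Hs := Nat.div_mod_eq s n). assert (Hr := Nat.mod_upper_bound s n Hn).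
  set (q := s / n) in *. set (r := s mod n) in *.
  replace (j + (n - r) + s) with (j + (q + 1) * n) by (rewrite Nat.mul_add_distr_r, Nat.mul_1_l, (Nat.mul_comm q n); lia).
  rewrite Nat.Div0.mod_add. apply Nat.mod_small; auto.
Qed.

Lemma succ_pred_mod k : k < n -> (((k + n - 1) mod n) + 1) mod n = k.
Proof.
  intros Hk. destruct k.
  - replace ((0 + n - 1) mod n + 1) with n. apply Nat.Div0.mod_same.
    rewrite Nat.mod_small by lia; lia.
  - replace (S k + n - 1) with (k + n) by lia. rewrite mod_plus_n, (Nat.mod_small k) by lia.
    rewrite Nat.mod_small; lia.
Qed.
Lemma pred_succ_mod j : j < n -> (((j + 1) mod n) + n - 1) mod n = j.
Proof.
  intros Hj. destruct (Nat.eq_dec (j + 1) n) as [E|E].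
  - rewrite E, Nat.Div0.mod_same. simpl. rewrite Nat.mod_small; lia.
  - rewrite (Nat.mod_small (j + 1)) by lia. replace (j + 1 + n - 1) with (j + n) by lia.
    rewrite mod_plus_n. rewrite Nat.mod_small; lia.
Qed.

Lemma in_window_iff s0 m k : s0 < n -> k < n ->
  (in_window n s0 m k = true <-> exists t, t < m /\ k = (s0 + t) mod n).
Proof.
  intros Hs0 Hk. unfold in_window. rewrite Nat.ltb_lt. split.
  - intros H. exists ((k + n - s0) mod n). split; auto.
    rewrite Nat.Div0.add_mod_idemp_r. replace (s0 + (k + n - s0)) with (k + n) by lia.
    rewrite mod_plus_n, Nat.mod_small; auto.
  - intros [t [Ht ->]].
    replace ((s0 + t) mod n + n - s0) with ((s0 + t) mod n + (n - s0)) by lia.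
    rewrite Nat.Div0.add_mod_idemp_l. replace (s0 + t + (n - s0)) with (t + n) by lia.
    rewrite mod_plus_n. eapply Nat.le_lt_trans. apply Nat.Div0.mod_le. auto.
Qed.
End Sites.

Close Scope nat_scope.
Close Scope R_scope.
Open Scope nat_scope.

Section Rot.
Variable d n : nat.
Hypothesis Hd : d <> 0.
Hypothesis Hn : n <> 0.

Definition rho (y : nat) : nat := num d (fun k => dig d ((k + 1) mod n) y) n.
Definition rhos (s y : nat) : nat := Nat.iter s rho y.

Lemma rho_lt y : rho y < d ^ n.
Proof. apply num_lt; auto. intros; apply dig_lt; auto. Qed.
Lemma dig_rho k y : k < n -> dig d k (rho y) = dig d ((k + 1) mod n) y.
Proof. intros Hk. unfold rho. rewrite dig_num; auto. intros; apply dig_lt; auto. Qed.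
Lemma rhos_lt s y : y < d ^ n -> rhos s y < d ^ n.
Proof. intros Hy. destruct s; simpl; auto. apply rho_lt. Qed.
Lemma dig_rhos s k y : k < n -> dig d k (rhos s y) = dig d ((k + s) mod n) y.
Proof.
  revert k. induction s; intros k Hk.
  - simpl. rewrite Nat.add_0_r, Nat.mod_small; auto.
  - change (rhos (S s) y) with (rho (rhos s y)). rewrite dig_rho by auto.
    rewrite IHs by (apply Nat.mod_upper_bound; auto).
    rewrite Nat.Div0.add_mod_idemp_l. f_equal. f_equal. lia.
Qed.
Lemma rhos_inj s y y' : y < d ^ n -> y' < d ^ n -> rhos s y = rhos s y' -> y = y'.
Proof.
  intros Hy Hy' E. apply (dig_ext d Hd n); auto. intros j Hj.
  destruct (sig_surj n Hn j s Hj) as [k [Hk Hks]].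
  rewrite <- Hks, <- !dig_rhos by auto. rewrite E. auto.
Qed.

Lemma transl_eq y x : y < d ^ n -> x < d ^ n ->
  transl d n y x = if Nat.eqb x (rho y) then C1 else C0.
Proof.
  intros Hy Hx. unfold transl.
  destruct (Nat.eqb_spec x (rho y)) as [->|Hne].
  - replace (forallb _ (seq 0 n)) with true; auto. symmetry. apply forallb_forall.
    intros k Hk. apply in_seq in Hk. apply Nat.eqb_eq.
    rewrite dig_rho by (apply Nat.mod_upper_bound; auto).
    rewrite succ_pred_mod by (auto; lia). auto.
  - destruct (forallb _ (seq 0 n)) eqn:F; auto. exfalso. apply Hne.
    rewrite forallb_forall in F.
    apply (dig_ext d Hd n); auto. apply rho_lt. intros j Hj.
    rewrite dig_rho by auto.
    assert (Hk : (j + 1) mod n < n) by (apply Nat.mod_upper_bound; auto).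
    specialize (F ((j + 1) mod n) ltac:(apply in_seq; lia)). apply Nat.eqb_eq in F.
    rewrite F, pred_succ_mod; auto.
Qed.

Lemma transl_mv v y : y < d ^ n -> mvmul (d ^ n) (transl d n) v y = v (rho y).
Proof.
  intros Hy. unfold mvmul.
  rewrite (csum_ext _ (fun x => Cmul (deltaC x (rho y)) (v x))).
  apply csum_delta_r. apply rho_lt.
  intros x Hx. rewrite transl_eq; auto.
Qed.
End Rot.

Close Scope nat_scope.
Close Scope R_scope.
Open Scope nat_scope.

Lemma csum_split f a b : csum f (a + b) = Cadd (csum f a) (csum (fun k => f (a + k)) b).
Proof.
  induction b; simpl. rewrite Nat.add_0_r. apply Cpx_eq; simpl; ring.
  rewrite Nat.add_succ_r. simpl. rewrite IHb. apply Cpx_eq; simpl; ring.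
Qed.

Lemma csum_flatten (h : nat -> nat -> Cpx) N M : M <> 0 ->
  csum (fun x => csum (fun y => h x y) M) N = csum (fun p => h (p / M) (p mod M)) (N * M).
Proof.
  intros HM. induction N; simpl; auto.
  replace (M + N * M) with (N * M + M) by lia. rewrite csum_split, IHN. f_equal.
  apply csum_ext. intros k Hk. f_equal.
  - replace (N * M + k) with (k + N * M) by lia. rewrite Nat.div_add by auto.
    rewrite Nat.div_small; auto.
  - replace (N * M + k) with (k + N * M) by lia. rewrite Nat.Div0.mod_add, Nat.mod_small; auto.
Qed.

Section Indep.
Variable d n : nat.
Hypothesis Hd : d <> 0.
Hypothesis Hn : n <> 0.
Let D := d ^ n.
Variable P : nat -> bool.

Definition mg (x y : nat) : nat := num d (fun k => if P k then dig d k x else dig d k y) n.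
Lemma mg_lt x y : mg x y < D.
Proof. apply num_lt; auto. intros k _. destruct (P k); apply dig_lt; auto. Qed.
Lemma dig_mg x y k : k < n -> dig d k (mg x y) = if P k then dig d k x else dig d k y.
Proof. intros Hk. unfold mg. rewrite dig_num; auto. intros j _. destruct (P j); apply dig_lt; auto. Qed.
Lemma mg_inv1 x y : x < D -> mg (mg x y) (mg y x) = x.
Proof.
  intros Hx. apply (dig_ext d Hd n); auto. apply mg_lt. intros k Hk.
  rewrite !dig_mg by auto. destruct (P k) eqn:E; auto.
Qed.

Lemma D_pos : D <> 0.
Proof. apply pow_pos; auto. Qed.

Lemma indep (f g : nat -> Cpx) :
  (forall x x', x < D -> x' < D -> (forall j, j < n -> P j = true -> dig d j x = dig d j x') -> f x = f x') ->
  (forall x x', x < D -> x' < D -> (forall j, j < n -> P j = false -> dig d j x = dig d j x') -> g x = g x') ->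
  Cmul (csum f D) (csum g D) = Cmul (Cofreal (INR D)) (csum (fun x => Cmul (f x) (g x)) D).
Proof.
  intros Hf Hg. assert (HD := D_pos).
  rewrite csum_mul, csum_flatten by auto.
  set (sg := fun p => mg (p / D) (p mod D) * D + mg (p mod D) (p / D)).
  assert (Hdiv : forall p, sg p / D = mg (p / D) (p mod D)).
  { intros p. unfold sg. rewrite Nat.add_comm, Nat.div_add, Nat.div_small; auto. apply mg_lt. }
  assert (Hmod : forall p, sg p mod D = mg (p mod D) (p / D)).
  { intros p. unfold sg. rewrite Nat.add_comm, Nat.Div0.mod_add, Nat.mod_small; auto. apply mg_lt. }
  assert (Hp : forall p, p < D * D -> p / D < D /\ p mod D < D).
  { intros p Hp. split. apply Nat.Div0.div_lt_upper_bound. lia. apply Nat.mod_upper_bound; auto. }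
  rewrite <- (csum_reindex sg (fun p => Cmul (f (p / D)) (g (p mod D)))).
  - rewrite (csum_ext _ (fun p => Cmul (f (p / D)) (g (p / D)))).
    2:{ intros p Hpp. rewrite Hdiv, Hmod. destruct (Hp p Hpp) as [h1 h2]. f_equal.
        - apply Hf; auto. apply mg_lt. intros j Hj Pj. rewrite dig_mg, Pj; auto.
        - apply Hg; auto. apply mg_lt. intros j Hj Pj. rewrite dig_mg, Pj; auto. }
    rewrite <- (csum_flatten (fun x y => Cmul (f x) (g x))) by auto.
    rewrite <- csum_scal. apply csum_ext. intros x _.
    rewrite (csum_ext _ (fun _ => Cmul (Cofreal 1) (Cmul (f x) (g x)))) by (intros; apply Cpx_eq; simpl; ring).
    rewrite (csum_scal_r (Cmul (f x) (g x)) (fun _ => Cofreal 1)), csum_ofreal, rsum_const. apply Cpx_eq; simpl; ring.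
  - intros p Hpp. destruct (Hp p Hpp) as [h1 h2]. unfold sg.
    assert (mg (p / D) (p mod D) < D) by apply mg_lt. assert (mg (p mod D) (p / D) < D) by apply mg_lt. nia.
  - intros p q Hpp Hq E. destruct (Hp p Hpp) as [p1 p2]. destruct (Hp q Hq) as [q1 q2].
    assert (E1 : mg (p / D) (p mod D) = mg (q / D) (q mod D)) by (rewrite <- !Hdiv, E; auto).
    assert (E2 : mg (p mod D) (p / D) = mg (q mod D) (q / D)) by (rewrite <- !Hmod, E; auto).
    assert (X1 : p / D = q / D).
    { rewrite <- (mg_inv1 (p / D) (p mod D)), <- (mg_inv1 (q / D) (q mod D)) by auto. rewrite E1, E2; auto. }
    assert (X2 : p mod D = q mod D).
    { rewrite <- (mg_inv1 (p mod D) (p / D)), <- (mg_inv1 (q mod D) (q / D)) by auto. rewrite E1, E2; auto. }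
    rewrite (Nat.div_mod_eq p D), (Nat.div_mod_eq q D), X1, X2. auto.
Qed.
End Indep.

Close Scope nat_scope.
Close Scope R_scope.
Open Scope nat_scope.

Section Local.
Variable d n : nat.
Hypothesis Hd : d <> 0.
Hypothesis Hn : n <> 0.
Let D := d ^ n.
Variable A : mat.
Variables (s0 m : nat) (a : nat -> nat -> Cpx).
Hypothesis Hs0 : s0 < n.
Hypothesis HA : forall y x, y < d ^ n -> x < d ^ n ->
  A y x = if agree_off d n s0 m y x then a (proj_window d n s0 m y) (proj_window d n s0 m x) else C0.

Definition Pw (s j : nat) : bool := existsb (fun t => Nat.eqb j ((s0 + s + t) mod n)) (seq 0 m).
Lemma Pw_iff s j : Pw s j = true <-> exists t, t < m /\ j = (s0 + s + t) mod n.
Proof.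
  unfold Pw. rewrite existsb_exists. split.
  - intros [t [Ht E]]. apply in_seq in Ht. apply Nat.eqb_eq in E. exists t; split; auto; lia.
  - intros [t [Ht E]]. exists t. split. apply in_seq; lia. apply Nat.eqb_eq; auto.
Qed.

Definition As (s y x : nat) : Cpx := A (rhos d n s y) (rhos d n s x).

Lemma agree_refl z : agree_off d n s0 m z z = true.
Proof.
  unfold agree_off. apply forallb_forall. intros k _. rewrite Nat.eqb_refl, orb_true_r. auto.
Qed.

Lemma window_shift k s : k < n -> in_window n s0 m k = true -> Pw s ((k + s) mod n) = true.
Proof.
  intros Hk Hw. apply (in_window_iff n Hn s0 m k Hs0 Hk) in Hw. destruct Hw as [t [Ht ->]].
  apply Pw_iff. exists t. split; auto. rewrite Nat.Div0.add_mod_idemp_l. f_equal. lia.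
Qed.

Lemma As_nonzero_agree s y x : y < D -> x < D -> As s y x <> C0 ->
  forall j, j < n -> Pw s j = false -> dig d j y = dig d j x.
Proof.
  intros Hy Hx Hnz j Hj Hp. unfold As in Hnz.
  rewrite HA in Hnz by (apply rhos_lt; auto).
  destruct (agree_off d n s0 m (rhos d n s y) (rhos d n s x)) eqn:Ag; [|congruence].
  unfold agree_off in Ag. rewrite forallb_forall in Ag.
  destruct (sig_surj n Hn j s Hj) as [k [Hk Hks]].
  specialize (Ag k ltac:(apply in_seq; lia)).
  apply orb_true_iff in Ag. destruct Ag as [W|E].
  - apply (window_shift k s Hk) in W. rewrite Hks in W. congruence.
  - apply Nat.eqb_eq in E. rewrite !(dig_rhos d n Hd Hn) in E by auto. rewrite Hks in E. auto.
Qed.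

Lemma diag_dep s x x' : x < D -> x' < D ->
  (forall j, j < n -> Pw s j = true -> dig d j x = dig d j x') -> As s x x = As s x' x'.
Proof.
  intros Hx Hx' H. unfold As. rewrite !HA by (apply rhos_lt; auto). rewrite !agree_refl.
  assert (E : proj_window d n s0 m (rhos d n s x) = proj_window d n s0 m (rhos d n s x')).
  { unfold proj_window. f_equal. apply map_ext_in. intros k Hk. apply in_seq in Hk.
    destruct (in_window n s0 m k) eqn:W; auto.
    rewrite !(dig_rhos d n Hd Hn) by lia. rewrite H; auto.
    apply Nat.mod_upper_bound; auto. apply window_shift; auto. lia. }
  rewrite E. auto.
Qed.

Lemma trace_As s : ctrace D A = C0 -> csum (fun x => As s x x) D = C0.
Proof.
  intros Ht. unfold As. rewrite (csum_reindex (rhos d n s) (fun z => A z z)).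
  exact Ht.
  intros; apply rhos_lt; auto.
  intros k l Hk Hl E. apply (rhos_inj d n Hd Hn s); auto.
Qed.

Lemma Cofreal_INR_cancel N z : N <> 0 -> Cmul (Cofreal (INR N)) z = C0 -> z = C0.
Proof.
  intros HN E. assert (H0 : (INR N <> 0)%R) by (apply not_0_INR; auto).
  apply (f_equal Re) in E as E1. apply (f_equal Im) in E as E2. simpl in *.
  apply Cpx_eq; simpl.
  - assert ((INR N * Re z)%R = 0%R) by lra. apply Rmult_integral in H. destruct H; auto. contradiction.
  - assert ((INR N * Im z)%R = 0%R) by lra. apply Rmult_integral in H. destruct H; auto. contradiction.
Qed.

Lemma As_orth s s' : ctrace D A = C0 ->
  (forall j, j < n -> Pw s j = true -> Pw s' j = true -> False) ->
  csum (fun y => csum (fun x => Cmul (Cconj (As s y x)) (As s' y x)) D) D = C0.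
Proof.
  intros Ht Hdisj.
  rewrite (csum_ext _ (fun y => Cmul (Cconj (As s y y)) (As s' y y))).
  2:{ intros y Hy.
      rewrite (csum_ext _ (fun x => Cmul (deltaC y x) (Cmul (Cconj (As s y x)) (As s' y x)))).
      apply csum_delta_l; auto.
      intros x Hx. unfold deltaC. destruct (Nat.eqb_spec y x) as [->|Hne]. apply Cpx_eq; simpl; ring.
      destruct (classic (As s y x = C0)) as [Z|Z]. rewrite Z. apply Cpx_eq; simpl; ring.
      destruct (classic (As s' y x = C0)) as [Z'|Z']. rewrite Z'. apply Cpx_eq; simpl; ring.
      exfalso. apply Hne. apply (dig_ext d Hd n); auto. intros j Hj.
      destruct (Pw s j) eqn:P1.
      - destruct (Pw s' j) eqn:P2. exfalso; eapply Hdisj; eauto.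
        apply (As_nonzero_agree s'); auto.
      - apply (As_nonzero_agree s); auto. }
  assert (I := indep d n Hd Hn (Pw s) (fun x => Cconj (As s x x)) (fun x => As s' x x)).
  apply (Cofreal_INR_cancel D). apply D_pos; auto.
  fold D in I. rewrite <- I.
  - rewrite <- Cconj_csum, trace_As by auto. rewrite Cconj_0. apply Cpx_eq; simpl; ring.
  - intros x x' Hx Hx' Hj. f_equal. apply diag_dep; auto.
  - intros x x' Hx Hx' Hj. apply diag_dep; auto. intros j Hjn P2.
    apply Hj; auto. destruct (Pw s j) eqn:P1; auto. exfalso; eapply Hdisj; eauto.
Qed.

Lemma As_norm s : rsum (fun y => rsum (fun x => Cnorm2 (As s y x)) D) D =
                  rsum (fun y => rsum (fun x => Cnorm2 (A y x)) D) D.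
Proof.
  unfold As.
  rewrite (rsum_ext _ (fun y => rsum (fun x => Cnorm2 (A (rhos d n s y) x)) D)).
  - apply (rsum_reindex (rhos d n s) (fun z => rsum (fun x => Cnorm2 (A z x)) D)).
    intros; apply rhos_lt; auto.
    intros k l Hk Hl E. apply (rhos_inj d n Hd Hn s); auto.
  - intros y Hy. apply (rsum_reindex (rhos d n s) (fun z => Cnorm2 (A (rhos d n s y) z))).
    intros; apply rhos_lt; auto.
    intros k l Hk Hl E. apply (rhos_inj d n Hd Hn s); auto.
Qed.

End Local.

Close Scope nat_scope.
Close Scope R_scope.
Open Scope R_scope.

Lemma Cnorm2_le_sum_single (f : nat -> Cpx) N c : (c < N)%nat -> Cnorm2 (f c) <= rsum (fun k => Cnorm2 (f k)) N.
Proof. intros Hc. apply (rsum_single_le (fun k => Cnorm2 (f k))); auto. intros; apply Cnorm2_nonneg. Qed.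

Lemma vnorm_sq D v : vnorm D v * vnorm D v = rsum (fun i => Cnorm2 (v i)) D.
Proof. unfold vnorm. apply sqrt_sqrt. apply rsum_nonneg; intros; apply Cnorm2_nonneg. Qed.

Lemma opnorm_sq D X M v : 0 < M -> opnorm_le D X M ->
  rsum (fun i => Cnorm2 (mvmul D X v i)) D <= M * M * rsum (fun i => Cnorm2 (v i)) D.
Proof.
  intros HM H. specialize (H v). rewrite <- !vnorm_sq.
  assert (0 <= vnorm D (mvmul D X v)) by apply sqrt_pos.
  assert (0 <= vnorm D v) by apply sqrt_pos.
  assert (vnorm D (mvmul D X v) * vnorm D (mvmul D X v) <= (M * vnorm D v) * (M * vnorm D v)).
  { apply Rmult_le_compat; auto. }
  nra.
Qed.

Section Eig3.
Variable D : nat.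
Variable b : nat -> vec.
Hypothesis Hon : forall j k, (j < D)%nat -> (k < D)%nat ->
  cinner D (b j) (b k) = if Nat.eqb j k then C1 else C0.

Lemma bnorm a : (a < D)%nat -> rsum (fun i => Cnorm2 (b a i)) D = 1.
Proof.
  intros Ha. assert (E := Hon a a Ha Ha). rewrite Nat.eqb_refl in E.
  apply (f_equal Re) in E. unfold cinner in E. rewrite Re_csum in E. simpl in E.
  rewrite <- E. apply rsum_ext. intros; unfold Cnorm2; simpl; ring.
Qed.

Lemma coef_mv X v c : coef D b (mvmul D X v) c = cinner D (b c) (mvmul D X v).
Proof. reflexivity. Qed.

Lemma diag_bound X : rsum (fun a => Cnorm2 (hat D b X a a)) D <=
   rsum (fun y => rsum (fun x => Cnorm2 (X y x)) D) D.
Proof.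
  apply Rle_trans with (rsum (fun a => rsum (fun c => Cnorm2 (hat D b X c a)) D) D).
  { apply rsum_le. intros a Ha. apply (Cnorm2_le_sum_single (fun c => hat D b X c a)); auto. }
  rewrite (rsum_ext _ (fun a => rsum (fun y => Cnorm2 (mvmul D X (b a) y)) D)).
  2:{ intros a Ha. unfold hat. apply (parseval D b Hon (mvmul D X (b a))). }
  rewrite rsum_swap. right. apply rsum_ext. intros y Hy.
  set (w := fun x => Cconj (X y x)).
  rewrite (rsum_ext _ (fun a => Cnorm2 (coef D b w a))).
  2:{ intros a Ha. rewrite <- Cnorm2_conj. f_equal. unfold coef, cinner, mvmul, w.
      rewrite Cconj_csum. apply csum_ext. intros; rewrite Cconj_mul; ring. }
  rewrite parseval by auto. apply rsum_ext. intros x _. unfold w. apply Cnorm2_conj.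
Qed.

Lemma colsum X M a : 0 < M -> opnorm_le D X M -> (a < D)%nat ->
  rsum (fun c => Cnorm2 (hat D b X c a)) D <= M * M.
Proof.
  intros HM Hop Ha. change (rsum (fun c => Cnorm2 (hat D b X c a)) D) with (rsum (fun c => Cnorm2 (coef D b (mvmul D X (b a)) c)) D). rewrite (parseval D b Hon (mvmul D X (b a))).
  eapply Rle_trans. apply opnorm_sq; eauto. rewrite bnorm by auto. lra.
Qed.

Lemma rowsum X M c : 0 < M -> opnorm_le D X M -> (c < D)%nat ->
  rsum (fun a => Cnorm2 (hat D b X c a)) D <= M * M.
Proof.
  intros HM Hop Hc.
  set (w := mvmul D (madj X) (b c)).
  rewrite (rsum_ext _ (fun a => Cnorm2 (coef D b w a))).
  2:{ intros a Ha. rewrite <- Cnorm2_conj, <- hat_adj. reflexivity. }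
  rewrite parseval by auto.
  set (S := rsum (fun i => Cnorm2 (w i)) D).
  assert (HS : 0 <= S) by (apply rsum_nonneg; intros; apply Cnorm2_nonneg).
  assert (Eq : Cofreal S = cinner D (b c) (mvmul D X w)).
  { unfold S. rewrite <- csum_ofreal.
    rewrite (csum_ext _ (fun i => Cmul (Cconj (w i)) (w i))) by (intros; rewrite Cmul_conj_l; auto).
    unfold cinner. change (mvmul D X w) with (fun j => csum (fun i => Cmul (X j i) (w i)) D). cbv beta.
    rewrite (csum_ext (fun i => Cmul (Cconj (w i)) (w i))
       (fun i => csum (fun j => Cmul (Cmul (Cconj (b c j)) (X j i)) (w i)) D)).
    2:{ intros i _. unfold w, mvmul, madj. rewrite Cconj_csum, <- csum_scal_r.
        apply csum_ext; intros; rewrite Cconj_mul, Cconj_conj; ring. }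
    rewrite csum_swap. apply csum_ext; intros j _. rewrite <- csum_scal.
    apply csum_ext; intros; ring. }
  set (z := cinner D (b c) (mvmul D X w)) in *.
  assert (S * S <= M * M * S).
  { apply Rle_trans with (Cnorm2 z).
    - assert (Re z = S) by (rewrite <- Eq; auto). unfold Cnorm2. rewrite H. nra.
    - apply Rle_trans with (rsum (fun e => Cnorm2 (coef D b (mvmul D X w) e)) D).
      apply (Cnorm2_le_sum_single (fun e => coef D b (mvmul D X w) e)); auto.
      rewrite parseval by auto. apply opnorm_sq; auto. }
  destruct (Req_dec S 0) as [->|Hne]. nra.
  assert (0 < S) by lra. nra.
Qed.

End Eig3.

Close Scope nat_scope.
Close Scope R_scope.
Open Scope R_scope.

Lemma Cmul_real_cancel r z : r <> 0 -> Cmul (Cofreal r) z = C0 -> z = C0.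
Proof.
  intros Hr E. apply (f_equal Re) in E as E1. apply (f_equal Im) in E as E2. simpl in *.
  apply Cpx_eq; simpl.
  - assert (r * Re z = 0) by lra. apply Rmult_integral in H. destruct H; auto. contradiction.
  - assert (r * Im z = 0) by lra. apply Rmult_integral in H. destruct H; auto. contradiction.
Qed.

Lemma Cnorm2_Cpow z s : Cnorm2 (Cpow z s) = Cnorm2 z ^ s.
Proof. induction s; simpl. unfold Cnorm2; simpl; ring. rewrite Cnorm2_mul, IHs. auto. Qed.

Section Transl.
Variable d n : nat.
Hypothesis Hd : d <> 0%nat.
Hypothesis Hn : n <> 0%nat.
Let D := (d ^ n)%nat.
Variable b : nat -> vec.
Hypothesis Hon : forall j k, (j < D)%nat -> (k < D)%nat ->
  cinner D (b j) (b k) = if Nat.eqb j k then C1 else C0.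
Variable H : mat.
Variable E : nat -> R.
Hypothesis Heig : forall j i, (j < D)%nat -> (i < D)%nat ->
        mvmul D H (b j) i = Cmul (Cofreal (E j)) (b j i).
Hypothesis Hcomm : mcommute D H (transl d n).
Hypothesis Hdist : forall c a, (c < D)%nat -> (a < D)%nat -> c <> a -> E c <> E a.

Let T := transl d n.

Lemma hatT_off c a : (c < D)%nat -> (a < D)%nat -> c <> a -> hat D b T c a = C0.
Proof.
  intros Hc Ha Hne.
  assert (E1 : hat D b (mmul D H T) c a = Cmul (Cofreal (E c)) (hat D b T c a)).
  { rewrite hat_mmul by auto.
    rewrite (csum_ext _ (fun e => Cmul (deltaC c e) (Cmul (Cofreal (E e)) (hat D b T e a)))).
    apply csum_delta_l; auto. intros e He. rewrite (hatH D b Hon H E Heig) by auto. ring. }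
  assert (E2 : hat D b (mmul D T H) c a = Cmul (Cofreal (E a)) (hat D b T c a)).
  { rewrite hat_mmul by auto.
    rewrite (csum_ext _ (fun e => Cmul (deltaC e a) (Cmul (Cofreal (E a)) (hat D b T c e)))).
    apply csum_delta_r; auto. intros e He. rewrite (hatH D b Hon H E Heig) by auto. ring. }
  assert (E3 : hat D b (mmul D H T) c a = hat D b (mmul D T H) c a).
  { apply hat_ext. intros; apply Hcomm; auto. }
  apply (Cmul_real_cancel (E c - E a)). generalize (Hdist c a Hc Ha Hne); lra.
  unfold Rminus. rewrite Cofreal_add.
  replace (Cmul (Cadd (Cofreal (E c)) (Cofreal (- E a))) (hat D b T c a))
    with (Csub (hat D b (mmul D H T) c a) (hat D b (mmul D T H) c a)).
  rewrite E3. apply Cpx_eq; simpl; ring.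
  rewrite E1, E2. apply Cpx_eq; simpl; ring.
Qed.

Definition lam a := hat D b T a a.

Lemma b_rho a i : (a < D)%nat -> (i < D)%nat -> b a (rho d n i) = Cmul (lam a) (b a i).
Proof.
  intros Ha Hi. rewrite <- (transl_mv d n Hd Hn (b a) i) by auto. fold D.
  rewrite (expansion D b Hon _ i Hi).
  rewrite (csum_ext _ (fun c => Cmul (deltaC c a) (Cmul (lam a) (b c i)))).
  apply csum_delta_r; auto.
  intros c Hc. change (coef D b (mvmul D (transl d n) (b a)) c) with (hat D b T c a).
  unfold deltaC. destruct (Nat.eqb_spec c a) as [->|Hne].
  - unfold lam. ring.
  - rewrite hatT_off by auto. ring.
Qed.

Lemma lam_norm a : (a < D)%nat -> Cnorm2 (lam a) = 1.
Proof.
  intros Ha.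
  assert (E1 : rsum (fun i => Cnorm2 (b a (rho d n i))) D = rsum (fun i => Cnorm2 (b a i)) D).
  { apply (rsum_reindex (rho d n) (fun i => Cnorm2 (b a i))).
    intros; apply rho_lt; auto.
    intros k l Hk Hl Ekl. apply (rhos_inj d n Hd Hn 1); auto. }
  rewrite (rsum_ext _ (fun i => Cnorm2 (lam a) * Cnorm2 (b a i))) in E1.
  2:{ intros i Hi. rewrite b_rho, Cnorm2_mul; auto. }
  rewrite rsum_scal, (bnorm D b Hon a Ha) in E1. lra.
Qed.

Lemma b_rhos a s i : (a < D)%nat -> (i < D)%nat -> b a (rhos d n s i) = Cmul (Cpow (lam a) s) (b a i).
Proof.
  intros Ha Hi. induction s.
  - simpl. ring.
  - change (rhos d n (S s) i) with (rho d n (rhos d n s i)).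
    rewrite b_rho, IHs; auto. simpl. ring. apply rhos_lt; auto.
Qed.

Definition Ash (A : mat) (s : nat) : mat := fun y x => A (rhos d n s y) (rhos d n s x).

Lemma hat_Ash A s a : (a < D)%nat -> hat D b (Ash A s) a a = hat D b A a a.
Proof.
  intros Ha. set (mu := Cpow (lam a) s).
  assert (Hmu : Cmul (Cconj mu) mu = C1).
  { rewrite Cmul_conj_l. unfold mu. rewrite Cnorm2_Cpow, lam_norm, pow1 by auto. apply Cpx_eq; simpl; ring. }
  assert (Hb : forall x, (x < D)%nat -> b a x = Cmul (Cconj mu) (b a (rhos d n s x))).
  { intros x Hx. rewrite b_rhos by auto. fold mu.
    replace (Cmul (Cconj mu) (Cmul mu (b a x))) with (Cmul (Cmul (Cconj mu) mu) (b a x)) by ring.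
    rewrite Hmu. ring. }
  unfold hat, cinner, mvmul, Ash.
  rewrite (csum_ext _ (fun y => Cmul (Cconj (b a (rhos d n s y)))
      (csum (fun x => Cmul (A (rhos d n s y) x) (b a x)) D))).
  - apply (csum_reindex (rhos d n s) (fun z => Cmul (Cconj (b a z)) (csum (fun x => Cmul (A z x) (b a x)) D))).
    intros; apply rhos_lt; auto.
    intros k l Hk Hl Ekl. apply (rhos_inj d n Hd Hn s); auto.
  - intros y Hy.
    rewrite <- (csum_reindex (rhos d n s) (fun x => Cmul (A (rhos d n s y) x) (b a x))).
    2:{ intros; apply rhos_lt; auto. }
    2:{ intros k l Hk Hl Ekl. apply (rhos_inj d n Hd Hn s); auto. }
    rewrite (Hb y Hy).
    rewrite (csum_ext (fun x => Cmul (A (rhos d n s y) (rhos d n s x)) (b a x))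
      (fun x => Cmul (Cconj mu) (Cmul (A (rhos d n s y) (rhos d n s x)) (b a (rhos d n s x))))).
    2:{ intros x Hx. rewrite (Hb x Hx). ring. }
    rewrite csum_scal. rewrite Cconj_mul, Cconj_conj.
    transitivity (Cmul (Cmul (Cconj mu) mu) (Cmul (Cconj (b a (rhos d n s y)))
        (csum (fun x => Cmul (A (rhos d n s y) (rhos d n s x)) (b a (rhos d n s x))) D))).
    ring. rewrite Hmu. ring.
Qed.
End Transl.

Close Scope nat_scope.
Close Scope R_scope.
Open Scope R_scope.

Lemma hat_sum D b (G : nat -> mat) K c a :
  hat D b (fun y x => csum (fun j => G j y x) K) c a = csum (fun j => hat D b (G j) c a) K.
Proof.
  rewrite hat_expand.
  rewrite (csum_ext _ (fun j => csum (fun i => csum (fun k => Cmul (Cconj (b c i)) (Cmul (G j i k) (b a k))) D) D) K)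
    by (intros; apply hat_expand).
  symmetry. rewrite csum_swap. apply csum_ext; intros i _. rewrite csum_swap. apply csum_ext; intros k _.
  rewrite <- csum_scal_r, <- csum_scal. auto.
Qed.

Lemma Cnorm2_csum (z : nat -> Cpx) K :
  Cofreal (Cnorm2 (csum z K)) = csum (fun j => csum (fun j' => Cmul (Cconj (z j)) (z j')) K) K.
Proof. rewrite <- Cmul_conj_l, Cconj_csum, csum_mul. auto. Qed.

Lemma HS_bound D (A : mat) M : 0 < M -> opnorm_le D A M ->
  rsum (fun y => rsum (fun x => Cnorm2 (A y x)) D) D <= INR D * (M * M).
Proof.
  intros HM Hop. rewrite rsum_swap. rewrite <- rsum_const. apply rsum_le. intros x Hx.
  set (e := fun i => deltaC i x).
  assert (E1 : forall y, (y < D)%nat -> mvmul D A e y = A y x).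
  { intros y Hy. unfold mvmul, e. rewrite (csum_ext _ (fun k => Cmul (deltaC k x) (A y k))).
    apply csum_delta_r; auto. intros; ring. }
  rewrite (rsum_ext _ (fun y => Cnorm2 (mvmul D A e y))) by (intros; rewrite E1; auto).
  eapply Rle_trans. apply opnorm_sq; eauto.
  assert (rsum (fun i => Cnorm2 (e i)) D = 1).
  { rewrite (rsum_ext _ (fun i => deltaR x i * 1)). apply rsum_delta_l; auto.
    intros i _. unfold e, deltaC, deltaR, Cnorm2. rewrite Nat.eqb_sym. destruct (Nat.eqb x i); simpl; ring. }
  rewrite H. lra.
Qed.

Section Avg.
Variable d n : nat.
Hypothesis Hd : d <> 0%nat.
Hypothesis Hn : n <> 0%nat.
Let D := (d ^ n)%nat.
Variable b : nat -> vec.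
Hypothesis Hon : forall j k, (j < D)%nat -> (k < D)%nat ->
  cinner D (b j) (b k) = if Nat.eqb j k then C1 else C0.
Variable H : mat.
Variable E : nat -> R.
Hypothesis Heig : forall j i, (j < D)%nat -> (i < D)%nat ->
        mvmul D H (b j) i = Cmul (Cofreal (E j)) (b j i).
Hypothesis Hcomm : mcommute D H (transl d n).
Hypothesis Hdist : forall c a, (c < D)%nat -> (a < D)%nat -> c <> a -> E c <> E a.

Lemma diag_sum_bound (A : mat) r M K :
  0 < M -> r_local d n r A -> traceless D A -> opnorm_le D A M ->
  (1 <= K)%nat -> (K = 1%nat \/ (K * r <= n)%nat) ->
  rsum (fun a => Cnorm2 (hat D b A a a)) D <= INR D * (M * M) / INR K.
Proof.
  intros HM [s0 [m [a [Hs0 [Hm HA]]]]] Htr Hop HK HKr.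
  assert (HKR : 0 < INR K) by (apply lt_0_INR; lia).
  set (Ab := fun y x => csum (fun j => Cmul (Cofreal (/ INR K)) (Ash d n A (j * r) y x)) K).
  assert (E1 : forall a', (a' < D)%nat -> hat D b Ab a' a' = hat D b A a' a').
  { intros a' Ha. unfold Ab. rewrite hat_sum.
    rewrite (csum_ext _ (fun _ => Cmul (Cofreal (/ INR K)) (hat D b A a' a'))).
    2:{ intros j _. change (fun y x => Cmul (Cofreal (/ INR K)) (Ash d n A (j * r) y x))
          with (mscale (Cofreal (/ INR K)) (Ash d n A (j * r))).
        rewrite hat_scale. f_equal. apply (hat_Ash d n Hd Hn b Hon H E Heig Hcomm Hdist); auto. }
    rewrite (csum_ext _ (fun k => Cmul (Cofreal 1) (Cmul (Cofreal (/ INR K)) (hat D b A a' a')))) by (intros; apply Cpx_eq; simpl; ring).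
    rewrite csum_scal_r, csum_ofreal, rsum_const. apply Cpx_eq; simpl; field; lra. }
  set (SA := rsum (fun y => rsum (fun x => Cnorm2 (A y x)) D) D).
  assert (HSA : SA <= INR D * (M * M)) by (apply HS_bound; auto).
  assert (E2 : rsum (fun y => rsum (fun x => Cnorm2 (Ab y x)) D) D = SA / INR K).
  { set (Z := fun j y x => Ash d n A (j * r) y x).
    assert (F : forall j j', (j < K)%nat -> (j' < K)%nat ->
       csum (fun y => csum (fun x => Cmul (Cconj (Z j y x)) (Z j' y x)) D) D = Cmul (deltaC j j') (Cofreal SA)).
    { intros j j' Hj Hj'. unfold deltaC. destruct (Nat.eqb_spec j j') as [<-|Hne].
      - rewrite (csum_ext _ (fun y => Cofreal (rsum (fun x => Cnorm2 (Z j y x)) D))).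
        2:{ intros y _. rewrite <- csum_ofreal. apply csum_ext; intros. rewrite Cmul_conj_l; auto. }
        rewrite csum_ofreal. change (rsum (fun y => rsum (fun x => Cnorm2 (Z j y x)) D) D) with (rsum (fun y => rsum (fun x => Cnorm2 (As d n A (j * r) y x)) D) D). unfold SA.
        assert (AN := As_norm d n Hd Hn A (j * r)). fold D in AN. rewrite AN. apply Cpx_eq; simpl; ring.
      - assert (Hdisj : forall i, (i < n)%nat -> Pw n s0 m (j * r) i = true -> Pw n s0 m (j' * r) i = true -> False).
        { intros i Hi P1 P2.
        apply (Pw_iff d n Hd Hn s0 m Hs0) in P1. apply (Pw_iff d n Hd Hn s0 m Hs0) in P2.
        destruct P1 as [t [Ht Ei]]. destruct P2 as [t' [Ht' Ei']].
        destruct HKr as [HK1|HKr']. lia.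
        assert (Hlt1 : (j * r + t < n)%nat) by nia. assert (Hlt2 : (j' * r + t' < n)%nat) by nia.
        assert (Eq : (j * r + t = j' * r + t')%nat).
        { apply (sig_inj n Hn _ _ s0 Hlt1 Hlt2).
          replace (j * r + t + s0)%nat with (s0 + j * r + t)%nat by lia.
          replace (j' * r + t' + s0)%nat with (s0 + j' * r + t')%nat by lia. congruence. }
        destruct (Nat.lt_total j j') as [Hl|[Hl|Hl]].
          - assert (j' * r >= (j+1) * r)%nat by (apply Nat.mul_le_mono_r; lia). lia.
          - lia.
          - assert (j * r >= (j'+1) * r)%nat by (apply Nat.mul_le_mono_r; lia). lia. }
        assert (AO := As_orth d n Hd Hn A s0 m a Hs0 HA (j * r) (j' * r) Htr Hdisj).
        fold D in AO. unfold As in AO. unfold Z, Ash. rewrite AO. apply Cpx_eq; simpl; ring. }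
    assert (Cofreal (rsum (fun y => rsum (fun x => Cnorm2 (Ab y x)) D) D) = Cofreal (SA / INR K)).
    2:{ apply (f_equal Re) in H0. simpl in H0. auto. }
    rewrite <- csum_ofreal.
    rewrite (csum_ext _ (fun y => csum (fun x => Cmul (Cofreal (/ INR K * / INR K))
        (csum (fun j => csum (fun j' => Cmul (Cconj (Z j y x)) (Z j' y x)) K) K)) D)).
    2:{ intros y _. rewrite <- csum_ofreal. apply csum_ext; intros x _.
        unfold Ab. rewrite csum_scal, Cnorm2_mul, Cofreal_mul, Cnorm2_csum.
        unfold Cnorm2 at 1. simpl. f_equal. f_equal. ring. }
    rewrite (csum_ext _ (fun y => Cmul (Cofreal (/ INR K * / INR K))
       (csum (fun j => csum (fun j' => csum (fun x => Cmul (Cconj (Z j y x)) (Z j' y x)) D) K) K))).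
    2:{ intros y _. rewrite csum_scal. f_equal. rewrite csum_swap. apply csum_ext; intros j _.
        apply csum_swap. }
    rewrite csum_scal. rewrite csum_swap.
    rewrite (csum_ext _ (fun j => csum (fun j' => Cmul (deltaC j j') (Cofreal SA)) K)).
    2:{ intros j Hj. rewrite csum_swap. apply csum_ext; intros j' Hj'. apply F; auto. }
    rewrite (csum_ext _ (fun j => Cofreal SA)).
    2:{ intros j Hj. apply csum_delta_l; auto. }
    rewrite csum_ofreal, rsum_const. apply Cpx_eq; simpl; field; lra. }
  rewrite (rsum_ext _ (fun a' => Cnorm2 (hat D b Ab a' a'))) by (intros; rewrite E1; auto).
  eapply Rle_trans. apply diag_bound; auto. rewrite E2. unfold Rdiv.
  apply Rmult_le_compat_r; auto. left; apply Rinv_0_lt_compat; auto.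
Qed.
End Avg.

Close Scope nat_scope.
Close Scope R_scope.
Open Scope R_scope.

Lemma expi_add x y : Cmul (expi x) (expi y) = expi (x + y).
Proof. unfold expi. apply Cpx_eq; simpl; [rewrite cos_plus | rewrite sin_plus]; ring. Qed.
Lemma expi_conj x : Cconj (expi x) = expi (- x).
Proof. unfold expi. apply Cpx_eq; simpl; [rewrite cos_neg | rewrite sin_neg]; ring. Qed.

Section Integrand.
Variable D : nat.
Variable b : nat -> vec.
Hypothesis Hon : forall j k, (j < D)%nat -> (k < D)%nat ->
  cinner D (b j) (b k) = if Nat.eqb j k then C1 else C0.
Variable E : nat -> R.
Variables (U V : R -> mat) (t : R).
Hypothesis HU : forall c a, (c < D)%nat -> (a < D)%nat -> hat D b (U t) c a = Cmul (deltaC c a) (expi (t * E a)).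
Hypothesis HV : forall c a, (c < D)%nat -> (a < D)%nat -> hat D b (V t) c a = Cmul (deltaC c a) (expi (- t * E a)).

Lemma hat_heis A c e : (c < D)%nat -> (e < D)%nat ->
  hat D b (heis D U V A t) c e = Cmul (Cmul (expi (t * E c)) (hat D b A c e)) (expi (- t * E e)).
Proof.
  intros Hc He. unfold heis. rewrite hat_mmul by auto.
  rewrite (csum_ext _ (fun q => Cmul (deltaC q e) (Cmul (hat D b (mmul D (U t) A) c q) (expi (- t * E e))))).
  2:{ intros q Hq. rewrite HV by auto. ring. }
  rewrite csum_delta_r by auto. rewrite hat_mmul by auto.
  rewrite (csum_ext _ (fun p => Cmul (deltaC c p) (Cmul (expi (t * E c)) (hat D b A c e)))).
  2:{ intros p Hp. rewrite HU by auto. unfold deltaC. destruct (Nat.eqb_spec c p) as [<-|]; ring. }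
  rewrite csum_delta_l by auto. auto.
Qed.

Definition ocoef (A B : mat) a e c b' : Cpx :=
  Cmul (Cofreal (/ INR D)) (Cmul (Cmul (Cmul (Cconj (hat D b A b' a)) (Cconj (hat D b B c b')))
     (hat D b A c e)) (hat D b B e a)).
Definition ofreq a e c b' : R := E a - E b' + E c - E e.

Lemma integrand_formula A B :
  otoc_integrand D U V A B t =
  csum (fun a => csum (fun e => csum (fun c => csum (fun b' =>
     Cmul (ocoef A B a e c b') (expi (ofreq a e c b' * t))) D) D) D) D.
Proof.
  unfold otoc_integrand, expect. rewrite (trace_hat D b Hon). rewrite Crscale_mul, <- csum_scal.
  apply csum_ext; intros a Ha.
  rewrite hat_mmul by auto. rewrite <- csum_scal. apply csum_ext; intros e He.
  rewrite hat_mmul by auto. rewrite <- csum_scal_r, <- csum_scal. apply csum_ext; intros c Hc.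
  rewrite hat_mmul by auto. rewrite <- csum_scal_r, <- csum_scal_r, <- csum_scal. apply csum_ext; intros b' Hb.
  rewrite !hat_adj, !hat_heis by auto.
  rewrite !Cconj_mul, !expi_conj.
  unfold ocoef, ofreq.
  set (X1 := hat D b A b' a). set (X2 := hat D b B c b'). set (X3 := hat D b A c e). set (X4 := hat D b B e a).
  transitivity (Cmul (Cmul (Cofreal (/ INR D)) (Cmul (Cmul (Cmul (Cconj X1) (Cconj X2)) X3) X4))
     (Cmul (Cmul (Cmul (expi (- (t * E b'))) (expi (- (- t * E a)))) (expi (t * E c))) (expi (- t * E e)))).
  ring.
  rewrite !expi_add. f_equal. f_equal. ring.
Qed.
End Integrand.

Close Scope nat_scope.
Close Scope R_scope.
Open Scope R_scope.

Lemma schur (x : nat -> R) (K : nat -> nat -> R) N S :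
  (forall a, (a < N)%nat -> 0 <= x a) ->
  (forall e a, (e < N)%nat -> (a < N)%nat -> 0 <= K e a) ->
  (forall a, (a < N)%nat -> rsum (fun e => K e a) N <= S) ->
  (forall e, (e < N)%nat -> rsum (fun a => K e a) N <= S) ->
  rsum (fun a => rsum (fun e => x a * x e * K e a) N) N <= S * rsum (fun a => x a * x a) N.
Proof.
  intros Hx HK Hc Hr.
  apply Rle_trans with (rsum (fun a => rsum (fun e => (/2 * (x a * x a)) * K e a + (/2 * (x e * x e)) * K e a) N) N).
  { apply rsum_le; intros a Ha; apply rsum_le; intros e He.
    assert (0 <= K e a) by auto.
    assert (x a * x e <= /2 * (x a * x a) + /2 * (x e * x e)).
    { assert (0 <= (x a - x e) * (x a - x e)) by apply Rle_0_sqr. nra. }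
    nra. }
  rewrite (rsum_ext _ (fun a => rsum (fun e => /2 * (x a * x a) * K e a) N + rsum (fun e => /2 * (x e * x e) * K e a) N))
    by (intros; apply rsum_add).
  rewrite rsum_add. rewrite (rsum_swap (fun a e => /2 * (x e * x e) * K e a)).
  rewrite (rsum_ext (fun a => rsum (fun e => /2 * (x a * x a) * K e a) N) (fun a => /2 * (x a * x a) * rsum (fun e => K e a) N))
    by (intros; apply rsum_scal).
  rewrite (rsum_ext (fun e => rsum (fun a => /2 * (x e * x e) * K e a) N) (fun e => /2 * (x e * x e) * rsum (fun a => K e a) N))
    by (intros; apply rsum_scal).
  apply Rle_trans with (rsum (fun a => /2 * (x a * x a) * S) N + rsum (fun a => /2 * (x a * x a) * S) N).
  { apply Rplus_le_compat; apply rsum_le; intros a Ha; apply Rmult_le_compat_l; auto;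
    assert (0 <= x a) by auto; nra. }
  rewrite <- rsum_add. rewrite <- rsum_scal. right. apply rsum_ext; intros. field.
Qed.

Lemma avgcv_csum4 (F : nat -> nat -> nat -> nat -> R -> Cpx) (L : nat -> nat -> nat -> nat -> Cpx) N :
  (forall a e c b, (a < N)%nat -> (e < N)%nat -> (c < N)%nat -> (b < N)%nat -> CQ.avgcv (F a e c b) (L a e c b)) ->
  CQ.avgcv (fun t => csum (fun a => csum (fun e => csum (fun c => csum (fun b => F a e c b t) N) N) N) N)
     (csum (fun a => csum (fun e => csum (fun c => csum (fun b => L a e c b) N) N) N) N).
Proof.
  intros H.
  apply (CQ.avgcv_csum (fun a t => csum (fun e => csum (fun c => csum (fun b => F a e c b t) N) N) N)); intros a Ha.
  apply (CQ.avgcv_csum (fun e t => csum (fun c => csum (fun b => F a e c b t) N) N)); intros e He.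
  apply (CQ.avgcv_csum (fun c t => csum (fun b => F a e c b t) N)); intros c Hc.
  apply (CQ.avgcv_csum (fun b t => F a e c b t)); intros b Hb.
  auto.
Qed.

Lemma rsum_delta_r c f N : (c < N)%nat -> rsum (fun k => deltaR k c * f k) N = f c.
Proof.
  intros H. rewrite <- (rsum_delta_l c f N H). apply rsum_ext. intros k _.
  unfold deltaR. rewrite Nat.eqb_sym. auto.
Qed.

Lemma deltaR_nonneg i j : 0 <= deltaR i j.
Proof. unfold deltaR. destruct (Nat.eqb i j); lra. Qed.

Close Scope nat_scope.
Close Scope R_scope.
Open Scope R_scope.

Lemma deltaR_refl i : deltaR i i = 1.
Proof. unfold deltaR. rewrite Nat.eqb_refl. auto. Qed.

Definition rsum4 (F : nat -> nat -> nat -> nat -> R) N :=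
  rsum (fun a => rsum (fun e => rsum (fun c => rsum (fun b => F a e c b) N) N) N) N.

Lemma Cmod_csum4 (F : nat -> nat -> nat -> nat -> Cpx) N :
  Cmod (csum (fun a => csum (fun e => csum (fun c => csum (fun b => F a e c b) N) N) N) N)
  <= rsum4 (fun a e c b => Cmod (F a e c b)) N.
Proof.
  eapply Rle_trans. apply Cmod_csum. apply rsum_le; intros a _.
  eapply Rle_trans. apply Cmod_csum. apply rsum_le; intros e _.
  eapply Rle_trans. apply Cmod_csum. apply rsum_le; intros c _.
  apply Cmod_csum.
Qed.

Lemma rsum4_le F G N : (forall a e c b, (a < N)%nat -> (e < N)%nat -> (c < N)%nat -> (b < N)%nat -> F a e c b <= G a e c b) ->
  rsum4 F N <= rsum4 G N.
Proof.
  intros H. unfold rsum4. apply rsum_le; intros a Ha. apply rsum_le; intros e He.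
  apply rsum_le; intros c Hc. apply rsum_le; intros b Hb. auto.
Qed.

Lemma rsum4_add F G N : rsum4 (fun a e c b => F a e c b + G a e c b) N = rsum4 F N + rsum4 G N.
Proof.
  unfold rsum4. rewrite <- rsum_add. apply rsum_ext; intros a _.
  rewrite <- rsum_add. apply rsum_ext; intros e _.
  rewrite <- rsum_add. apply rsum_ext; intros c _.
  apply rsum_add.
Qed.

Theorem theorem2 (d r : nat) (M : R) :
  (2 <= d)%nat -> (1 <= r)%nat -> 0 < M ->
  exists Cst : R, 0 < Cst /\
  forall (n : nat) (H A B : mat) (E : nat -> R) (U V : R -> mat),
    hermitian (Nat.pow d n) H ->
    mcommute (Nat.pow d n) H (transl d n) ->
    spectrum_of (Nat.pow d n) H E ->
    nondeg_gaps (Nat.pow d n) E ->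
    traceless (Nat.pow d n) A -> traceless (Nat.pow d n) B ->
    r_local d n r A -> r_local d n r B ->
    opnorm_le (Nat.pow d n) A M -> opnorm_le (Nat.pow d n) B M ->
    (forall t, is_mexp (Nat.pow d n) (mscale (mkCpx 0 t) H) (U t)) ->
    (forall t, is_mexp (Nat.pow d n) (mscale (mkCpx 0 (- t)) H) (V t)) ->
    exists L : Cpx,
      time_avg_cv (otoc_integrand (Nat.pow d n) U V A B) L /\
      Cmod L <= Cst / INR n.
Proof.
  intros Hd2 Hr HM.
  assert (HrR : 0 < INR r) by (apply lt_0_INR; lia).
  assert (HM2 : 0 < M * M) by nra.
  exists (4 * INR r * (M * M * (M * M))). split. { assert (0 < M * M * (M * M)) by nra. nra. }
  intros n H A B E U V Hherm Hcomm Hspec Hgap HtrA HtrB HlocA HlocB HopA HopB HU HV.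
  assert (Hn : n <> 0%nat) by (destruct HlocA as [s [m [a [Hs _]]]]; lia).
  assert (Hd : d <> 0%nat) by lia.
  destruct Hspec as [bs [Hon Heig]].
  assert (HD0 : (Nat.pow d n <> 0)%nat) by (apply Nat.pow_nonzero; auto).
  assert (HDR : 0 < INR (Nat.pow d n)) by (apply lt_0_INR; lia).
  assert (Hdist : forall c a, (c < Nat.pow d n)%nat -> (a < Nat.pow d n)%nat -> c <> a -> E c <> E a).
  { intros c a Hc Ha Hne Heq. destruct (Hgap c a a c Hc Ha Ha Hc Hne) as [h _]. lra. auto. }
  assert (HU' : forall t c a, (c < Nat.pow d n)%nat -> (a < Nat.pow d n)%nat ->
     hat (Nat.pow d n) bs (U t) c a = Cmul (deltaC c a) (expi (t * E a))).
  { intros t c a Hc Ha. apply (hatU (Nat.pow d n) bs Hon H E Heig (mkCpx 0 t) (U t) (HU t) eq_refl c a Hc Ha). }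
  assert (HV' : forall t c a, (c < Nat.pow d n)%nat -> (a < Nat.pow d n)%nat ->
     hat (Nat.pow d n) bs (V t) c a = Cmul (deltaC c a) (expi (- t * E a))).
  { intros t c a Hc Ha. apply (hatU (Nat.pow d n) bs Hon H E Heig (mkCpx 0 (- t)) (V t) (HV t) eq_refl c a Hc Ha). }
  set (D := Nat.pow d n) in *.
  set (W := fun a e c b' => ocoef D bs A B a e c b').
  exists (csum (fun a => csum (fun e => csum (fun c => csum (fun b' =>
     if Req_EM_T (ofreq E a e c b') 0 then W a e c b' else C0) D) D) D) D).
  split.
  - apply CQ.avgcv_time.
    apply CQ.avgcv_ext with (fun t => csum (fun a => csum (fun e => csum (fun c => csum (fun b' =>
       Cmul (ocoef D bs A B a e c b') (expi (ofreq E a e c b' * t))) D) D) D) D).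
    { intros t. symmetry. apply (integrand_formula D bs Hon E U V t (HU' t) (HV' t)). }
    apply (avgcv_csum4 (fun a e c b' t => Cmul (ocoef D bs A B a e c b') (expi (ofreq E a e c b' * t)))).
    intros. apply CQ.avgcv_term.
  - set (Ah := fun c a => hat D bs A c a). set (Bh := fun c a => hat D bs B c a).
    set (Wm := fun a e c b' => / INR D * (Cmod (Ah b' a) * Cmod (Bh c b') * Cmod (Ah c e) * Cmod (Bh e a))).
    assert (HWm : forall a e c b', Cmod (W a e c b') = Wm a e c b').
    { intros. unfold W, Wm, ocoef. rewrite !Cmod_mul, !Cmod_conj, Cmod_ofreal.
      rewrite Rabs_right. unfold Ah, Bh. ring. left; apply Rinv_0_lt_compat; auto. }
    assert (HWm0 : forall a e c b', 0 <= Wm a e c b').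
    { intros. unfold Wm. apply Rmult_le_pos. left; apply Rinv_0_lt_compat; auto.
      repeat apply Rmult_le_pos; apply Cmod_nonneg. }
    assert (Hres : forall a e c b', (a < D)%nat -> (e < D)%nat -> (c < D)%nat -> (b' < D)%nat ->
        ofreq E a e c b' = 0 -> (a = b' /\ c = e) \/ (a = e /\ b' = c)).
    { intros a e c b' Ha He Hc Hb Hf. unfold ofreq in Hf.
      destruct (Nat.eq_dec a b') as [<-|Hne].
      - left. split; auto. destruct (Nat.eq_dec c e) as [|Hce]; auto.
        exfalso. apply (Hdist c e Hc He Hce). lra.
      - right. apply (Hgap a b' e c); auto. lra. }
    eapply Rle_trans. apply Cmod_csum4.
    eapply Rle_trans.
    { apply (rsum4_le _ (fun a e c b' => deltaR a b' * deltaR c e * Wm a e c b' + deltaR a e * deltaR b' c * Wm a e c b')).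
      intros a e c b' Ha He Hc Hb.
      assert (P1 := deltaR_nonneg a b'). assert (P2 := deltaR_nonneg c e).
      assert (P3 := deltaR_nonneg a e). assert (P4 := deltaR_nonneg b' c). assert (P5 := HWm0 a e c b').
      destruct (Req_EM_T (ofreq E a e c b') 0) as [Hz|Hz].
      - rewrite HWm. destruct (Hres a e c b' Ha He Hc Hb Hz) as [[<- <-]|[<- <-]];
        rewrite !deltaR_refl.
        + assert (0 <= deltaR a c * deltaR a c * Wm a c c a) by (apply Rmult_le_pos; [apply Rmult_le_pos|]; auto). lra.
        + assert (0 <= deltaR a b' * deltaR b' a * Wm a a b' b') by (apply Rmult_le_pos; [apply Rmult_le_pos|]; auto). lra.
      - rewrite Cmod_0.
        assert (0 <= deltaR a b' * deltaR c e * Wm a e c b') by (apply Rmult_le_pos; [apply Rmult_le_pos|]; auto).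
        assert (0 <= deltaR a e * deltaR b' c * Wm a e c b') by (apply Rmult_le_pos; [apply Rmult_le_pos|]; auto). lra. }
    rewrite rsum4_add.
    assert (T1 : rsum4 (fun a e c b' => deltaR a b' * deltaR c e * Wm a e c b') D =
                 rsum (fun a => rsum (fun e => Wm a e e a) D) D).
    { unfold rsum4. apply rsum_ext; intros a Ha. apply rsum_ext; intros e He.
      rewrite (rsum_ext _ (fun c => deltaR c e * Wm a e c a)).
      - apply (rsum_delta_r e (fun c => Wm a e c a)); auto.
      - intros c Hc. rewrite (rsum_ext _ (fun b' => deltaR a b' * (deltaR c e * Wm a e c b'))).
        apply (rsum_delta_l a (fun b' => deltaR c e * Wm a e c b')); auto. intros; ring. }
    assert (T2 : rsum4 (fun a e c b' => deltaR a e * deltaR b' c * Wm a e c b') D =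
                 rsum (fun a => rsum (fun c => Wm a a c c) D) D).
    { unfold rsum4. apply rsum_ext; intros a Ha.
      rewrite (rsum_ext _ (fun e => deltaR a e * rsum (fun c => Wm a e c c) D)).
      - apply (rsum_delta_l a (fun e => rsum (fun c => Wm a e c c) D)); auto.
      - intros e He. rewrite <- rsum_scal. apply rsum_ext; intros c Hc.
        rewrite (rsum_ext _ (fun b' => deltaR b' c * (deltaR a e * Wm a e c b'))).
        apply (rsum_delta_r c (fun b' => deltaR a e * Wm a e c b')); auto. intros; ring. }
    rewrite T1, T2.
    set (x := fun a => Cmod (Ah a a)). set (y := fun a => Cmod (Bh a a)).
    rewrite (rsum_ext _ (fun a => / INR D * rsum (fun e => x a * x e * Cnorm2 (Bh e a)) D)).
    2:{ intros a Ha. rewrite <- rsum_scal. apply rsum_ext; intros e He. unfold Wm, x.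
        rewrite <- Cmod_sqr. ring. }
    rewrite (rsum_ext (fun a => rsum (fun c => Wm a a c c) D) (fun a => / INR D * rsum (fun c => y a * y c * Cnorm2 (Ah c a)) D)).
    2:{ intros a Ha. rewrite <- rsum_scal. apply rsum_ext; intros c Hc. unfold Wm, y.
        rewrite <- Cmod_sqr. ring. }
    rewrite !rsum_scal.
    assert (S1 : rsum (fun a => rsum (fun e => x a * x e * Cnorm2 (Bh e a)) D) D <= M * M * rsum (fun a => x a * x a) D).
    { apply schur. intros; apply Cmod_nonneg. intros; apply Cnorm2_nonneg.
      intros a Ha. apply (colsum D bs Hon B M a HM HopB Ha).
      intros e He. apply (rowsum D bs Hon B M e HM HopB He). }
    assert (S2 : rsum (fun a => rsum (fun c => y a * y c * Cnorm2 (Ah c a)) D) D <= M * M * rsum (fun a => y a * y a) D).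
    { apply schur. intros; apply Cmod_nonneg. intros; apply Cnorm2_nonneg.
      intros a Ha. apply (colsum D bs Hon A M a HM HopA Ha).
      intros c Hc. apply (rowsum D bs Hon A M c HM HopA Hc). }
    assert (HKex : exists K, (1 <= K)%nat /\ (K = 1%nat \/ (K * r <= n)%nat) /\ (n <= 2 * r * K)%nat).
    { destruct (lt_dec n r) as [Hlt|Hge].
      - exists 1%nat. repeat split; auto. lia.
      - exists (n / r)%nat. assert (H1 : (1 <= n / r)%nat).
        { apply Nat.div_str_pos; lia. }
        assert (H2 : (r * (n / r) <= n)%nat) by (apply Nat.Div0.mul_div_le).
        assert (H3 := Nat.div_mod_eq n r). assert (H4 : (n mod r < r)%nat) by (apply Nat.mod_upper_bound; lia).
        repeat split; auto. right. lia. nia. }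
    destruct HKex as [K [HK1 [HKr HnK]]].
    assert (HKR : 0 < INR K) by (apply lt_0_INR; lia).
    assert (HnR : 0 < INR n) by (apply lt_0_INR; lia).
    assert (HnK' : INR n <= 2 * INR r * INR K).
    { replace 2 with (INR 2) by (simpl; ring). rewrite <- !mult_INR. apply le_INR. auto. }
    assert (DA : rsum (fun a => x a * x a) D <= INR D * (M * M) / INR K).
    { rewrite (rsum_ext _ (fun a => Cnorm2 (hat D bs A a a))) by (intros; unfold x, Ah; apply Cmod_sqr).
      apply (diag_sum_bound d n Hd Hn bs Hon H E Heig Hcomm Hdist A r M K); auto. }
    assert (DB : rsum (fun a => y a * y a) D <= INR D * (M * M) / INR K).
    { rewrite (rsum_ext _ (fun a => Cnorm2 (hat D bs B a a))) by (intros; unfold y, Bh; apply Cmod_sqr).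
      apply (diag_sum_bound d n Hd Hn bs Hon H E Heig Hcomm Hdist B r M K); auto. }
    set (P := M * M * (M * M)).
    assert (HP : 0 < P) by (unfold P; nra).
    assert (HiD : 0 < / INR D) by (apply Rinv_0_lt_compat; auto).
    apply Rle_trans with (/ INR D * (M * M * (INR D * (M * M) / INR K)) + / INR D * (M * M * (INR D * (M * M) / INR K))).
    { apply Rplus_le_compat; apply Rmult_le_compat_l; try lra.
      - eapply Rle_trans. apply S1. apply Rmult_le_compat_l; auto. lra.
      - eapply Rle_trans. apply S2. apply Rmult_le_compat_l; auto. lra. }
    replace (/ INR D * (M * M * (INR D * (M * M) / INR K)) + / INR D * (M * M * (INR D * (M * M) / INR K)))
      with (2 * P * INR n / (INR K * INR n)) by (unfold P; field; lra).
    replace (4 * INR r * P / INR n) with (4 * INR r * P * INR K / (INR K * INR n)) by (field; lra).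
    unfold Rdiv. apply Rmult_le_compat_r. left; apply Rinv_0_lt_compat; nra.
    nra.
Qed.
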